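(* Let $s>1/2$. For $\tau\in\mathbb{R}$ let $\mathcal H_1(\tau)$ be the linear operator on $2\pi$-periodic functions defined by $\mathcal H_1(\tau)e_n=e^{-in^3\tau}e_n$, $n\in\mathbb Z$, and for $w\in H^s$ set $$F(\tau,w):=\mathcal H_1(-\tau)\big(\mathcal H_1(\tau)w\cdot|\mathcal H_1(\tau)w|^2\big).$$ Then for every fixed $\tau$ the map $w\mapsto F(\tau,w)$ is a bounded smooth map from $H^s$ to itself with $$\|F(\tau,w)\|_{H^s}\le C_s\|w\|_{H^s}^3,$$ where $C_s$ does not depend on $\tau$. Moreover, $F$ is $2\pi$-periodic in $\tau$ and its time average $\frac1{2\pi}\int_0^{2\pi}F(\tau,w)\,d\tau=:N(w)$ is given by $$N(w)=2w\|w\|_{H}^2+\bar w\, [w,w]-2 w_0|w_0|^2e_0-\sum_{n\ne0}w_n(|w_n|^2+2|w_{-n}|^2)e_n,$$ equivalently $$N(w)=\Big(2w_0(\|w\|^2_H-|w_0|^2)+\bar w_0[w,w]\Big)e_0+\sum_{n\ne0}\Big(w_n(2\|w\|^2_H-|w_n|^2-2|w_{-n}|^2)+\bar w_{-n}[w,w]\Big)e_n.$$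
   Context: $e_n(x)=e^{inx}$, $n\in\mathbb Z$. $H=L^2_{per}(-\pi,\pi)$ is the space of complex-valued $2\pi$-periodic square-integrable functions; every $v$ is written $v=\sum_{n\in\mathbb Z}v_ne_n$, with $\|v\|_H^2=\sum_n|v_n|^2$ and $\|v\|_{H^s}^2=\sum_n(|n|^2+1)^s|v_n|^2$ ($H^s$ the periodic Sobolev space). For $w=\sum w_ne_n$, $v=\sum v_ne_n$, $[w,v]:=\sum_{n\in\mathbb Z}w_nv_{-n}$, and $\bar w$ is the complex conjugate function, $\bar w=\sum_n \bar w_{-n}e_n$. *)

(* Defs.v *)
(* Periodic functions are represented by their
   Fourier coefficient sequences Z -> C  (v = sum_n v n e_n). *)
From Stdlib Require Import Reals Lra Lia ZArith List.
From Coquelicot Require Import Coquelicot.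
Open Scope R_scope.

Definition seqZ := Z -> C.

Definition abs_summableZ (a : seqZ) : Prop :=
  ex_series (fun k : nat => Cmod (a (Z.of_nat k)) + Cmod (a (- Z.of_nat k - 1)%Z)).
Definition sumZ (a : seqZ) : C :=
  (Series (fun k : nat => Re (a (Z.of_nat k)) + Re (a (- Z.of_nat k - 1)%Z)),
   Series (fun k : nat => Im (a (Z.of_nat k)) + Im (a (- Z.of_nat k - 1)%Z))).

Definition weight (s : R) (n : Z) : R := Rpower (IZR n ^ 2 + 1) s.

Definition hs_terms (s : R) (v : seqZ) (k : nat) : R :=
  weight s (Z.of_nat k) * Cmod (v (Z.of_nat k)) ^ 2
  + weight s (- Z.of_nat k - 1)%Z * Cmod (v (- Z.of_nat k - 1)%Z) ^ 2.

Definition in_Hs (s : R) (v : seqZ) : Prop := ex_series (hs_terms s v).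
Definition hs_norm (s : R) (v : seqZ) : R := sqrt (Series (hs_terms s v)).
Definition h_norm (v : seqZ) : R := hs_norm 0 v.

Definition szero : seqZ := fun _ => 0%C.
Definition sadd (u v : seqZ) : seqZ := fun n => (u n + v n)%C.
Definition ssub (u v : seqZ) : seqZ := fun n => (u n - v n)%C.
Definition sscal (a : R) (u : seqZ) : seqZ := fun n => (RtoC a * u n)%C.

Definition e_ (m : Z) : seqZ := fun n => if Z.eqb n m then 1%C else 0%C.

(* product of functions = convolution of Fourier coefficients *)
Definition conv (u v : seqZ) : seqZ := fun n => sumZ (fun m => (u m * v (n - m)%Z)%C).
(* complex conjugate function: bar w = sum_n conj(w_{-n}) e_n *)
Definition sconj (w : seqZ) : seqZ := fun n => Cconj (w (- n)%Z).
Definition bracket (w v : seqZ) : C := sumZ (fun n => (w n * v (- n)%Z)%C).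

Definition H1 (tau : R) (v : seqZ) : seqZ :=
  fun n => (((cos (IZR (n ^ 3) * tau))%R, (- sin (IZR (n ^ 3) * tau))%R) * v n)%C.

(* F(tau,w) = H_1(-tau) ( H_1(tau)w * |H_1(tau)w|^2 ),  |u|^2 = u * bar u *)
Definition Fnl (tau : R) (w : seqZ) : seqZ :=
  let u := H1 tau w in H1 (- tau) (conv (conv u u) (sconj u)).

Definition Nav (w : seqZ) : seqZ :=
  fun n =>
    (RtoC 2 * w n * RtoC (h_norm w ^ 2) + sconj w n * bracket w w
     - (if Z.eqb n 0 then RtoC 2 * w 0%Z * RtoC (Cmod (w 0%Z) ^ 2)
        else w n * RtoC (Cmod (w n) ^ 2 + 2 * Cmod (w (- n)%Z) ^ 2)))%C.

Definition Nav' (w : seqZ) : seqZ :=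
  fun n =>
    if Z.eqb n 0 then
      (RtoC 2 * w 0%Z * RtoC (h_norm w ^ 2 - Cmod (w 0%Z) ^ 2)
       + Cconj (w 0%Z) * bracket w w)%C
    else
      (w n * RtoC (2 * h_norm w ^ 2 - Cmod (w n) ^ 2 - 2 * Cmod (w (- n)%Z) ^ 2)
       + Cconj (w (- n)%Z) * bracket w w)%C.

Definition upd (hs : nat -> seqZ) (i : nat) (u : seqZ) : nat -> seqZ :=
  fun j => if Nat.eqb j i then u else hs j.

Definition prod_norms (s : R) (k : nat) (hs : nat -> seqZ) : R :=
  fold_right Rmult 1 (map (fun i => hs_norm s (hs i)) (seq 0 k)).

Definition bounded_multilinear (s : R) (k : nat) (L : (nat -> seqZ) -> seqZ) : Prop :=
  (forall hs, (forall i, (i < k)%nat -> in_Hs s (hs i)) -> in_Hs s (L hs)) /\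
  (forall hs hs', (forall i, (i < k)%nat -> hs i = hs' i) -> L hs = L hs') /\
  (forall hs i (a b : R) u v, (i < k)%nat ->
     (forall j, (j < k)%nat -> in_Hs s (hs j)) -> in_Hs s u -> in_Hs s v ->
     L (upd hs i (sadd (sscal a u) (sscal b v)))
     = sadd (sscal a (L (upd hs i u))) (sscal b (L (upd hs i v)))) /\
  (exists M, forall hs, (forall i, (i < k)%nat -> in_Hs s (hs i)) ->
     hs_norm s (L hs) <= M * prod_norms s k hs).

Definition shift_in (h : seqZ) (hs : nat -> seqZ) : nat -> seqZ :=
  fun j => match j with O => h | S j' => hs j' end.

(* f : H^s -> H^s is C^infinity: there are D k w (the k-th Frechet derivative at w,
   a bounded k-linear map), D 0 w = f w, and each w |-> D k w is Frechet
   differentiable (in operator norm) with derivative h |-> D (k+1) w (h, .). *)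
Definition smooth_Hs (s : R) (f : seqZ -> seqZ) : Prop :=
  exists D : nat -> seqZ -> (nat -> seqZ) -> seqZ,
    (forall w hs, in_Hs s w -> D 0%nat w hs = f w) /\
    (forall k w, in_Hs s w -> bounded_multilinear s k (D k w)) /\
    (forall k w, in_Hs s w -> forall eps, 0 < eps -> exists delta, 0 < delta /\
       forall h, in_Hs s h -> hs_norm s h < delta ->
       forall hs, (forall i, (i < k)%nat -> in_Hs s (hs i) /\ hs_norm s (hs i) <= 1) ->
       hs_norm s (ssub (D k (sadd w h) hs)
                       (sadd (D k w hs) (D (S k) w (shift_in h hs))))
       <= eps * hs_norm s h).

(* Main.v *)
Require Import Defs.
From Stdlib Require Import Reals ZArith Lra Lia Psatz List Permutation FunctionalExtensionality.
From Coquelicot Require Import Coquelicot.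
Open Scope R_scope.

Definition pr (a : Z -> R) (k : nat) : R := a (Z.of_nat k) + a (- Z.of_nat k - 1)%Z.
Definition zok (a : Z -> R) : Prop := ex_series (pr a).
Definition zser (a : Z -> R) : R := Series (pr a).

Fixpoint win (N : nat) : list Z :=
  match N with O => nil | S N' => Z.of_nat N' :: (- Z.of_nat N' - 1)%Z :: win N' end.

Fixpoint lsum (a : Z -> R) (l : list Z) : R :=
  match l with nil => 0 | x :: l' => a x + lsum a l' end.

Lemma lsum_app a l1 l2 : lsum a (l1 ++ l2) = lsum a l1 + lsum a l2.
Proof. induction l1; simpl; [ring| rewrite IHl1; ring]. Qed.

Lemma lsum_ext a b l : (forall x, In x l -> a x = b x) -> lsum a l = lsum b l.
Proof. induction l; simpl; intros H; [auto| rewrite H, IHl; auto]. Qed.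

Lemma lsum_plus a b l : lsum (fun x => a x + b x) l = lsum a l + lsum b l.
Proof. induction l; simpl; [ring| rewrite IHl; ring]. Qed.

Lemma lsum_scal c a l : lsum (fun x => c * a x) l = c * lsum a l.
Proof. induction l; simpl; [ring| rewrite IHl; ring]. Qed.

Lemma lsum_le a b l : (forall x, a x <= b x) -> lsum a l <= lsum b l.
Proof. induction l; simpl; intros H; [lra| specialize (IHl H); specialize (H a0); lra]. Qed.

Lemma lsum_nonneg a l : (forall x, 0 <= a x) -> 0 <= lsum a l.
Proof. induction l; simpl; intros H; [lra| specialize (IHl H); specialize (H a0); lra]. Qed.

Lemma lsum_map a f l : lsum a (map f l) = lsum (fun x => a (f x)) l.
Proof. induction l; simpl; [auto| rewrite IHl; auto]. Qed.

Lemma lsum_perm a l1 l2 : Permutation l1 l2 -> lsum a l1 = lsum a l2.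
Proof. induction 1; simpl; lra. Qed.

Lemma plusR (x y : R) : plus x y = x + y.
Proof. reflexivity. Qed.

Lemma lsum_win a N : lsum a (win (S N)) = sum_n (pr a) N.
Proof.
  induction N.
  - rewrite sum_O. cbn [win lsum]. unfold pr. ring.
  - rewrite sum_Sn, <- IHN, plusR. cbn [win lsum]. unfold pr. ring.
Qed.

Lemma in_win N x : In x (win N) <-> (- Z.of_nat N <= x < Z.of_nat N)%Z.
Proof.
  induction N; simpl.
  - lia.
  - rewrite IHN. lia.
Qed.

Lemma nodup_win N : NoDup (win N).
Proof.
  induction N; simpl. constructor.
  constructor.
  - simpl. intros [H|H]; [lia|]. apply in_win in H. lia.
  - constructor; auto. intros H; apply in_win in H; lia.
Qed.

Lemma win_cover (l : list Z) : exists N, forall x, In x l -> In x (win N).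
Proof.
  induction l as [|x l [N HN]].
  - exists O; simpl; tauto.
  - exists (Nat.max N (S (Z.to_nat (Z.abs x)))). intros y [<-|Hy].
    + apply in_win. lia.
    + apply HN in Hy. apply in_win in Hy. apply in_win. lia.
Qed.

Lemma lsum_sub_le a l w : (forall x, 0 <= a x) -> NoDup l -> NoDup w ->
  (forall x, In x l -> In x w) -> lsum a l <= lsum a w.
Proof.
  intros Ha. revert w. induction l as [|x l IH]; intros w Hl Hw Hinc; simpl.
  - apply lsum_nonneg; auto.
  - assert (Hx : In x w) by (apply Hinc; left; auto).
    destruct (in_split _ _ Hx) as [w1 [w2 ->]].
    rewrite lsum_app. simpl.
    inversion Hl; subst.
    assert (lsum a l <= lsum a (w1 ++ w2)).
    { apply IH; auto. eapply NoDup_remove_1; eauto.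
      intros y Hy. assert (Hyw : In y (w1 ++ x :: w2)) by (apply Hinc; right; auto).
      apply in_app_or in Hyw. apply in_or_app. destruct Hyw as [?|[?|?]]; auto.
      subst; contradiction. }
    rewrite lsum_app in H. lra.
Qed.

Lemma pr_nonneg a k : (forall x, 0 <= a x) -> 0 <= pr a k.
Proof. intros H; unfold pr; pose proof (H (Z.of_nat k)); pose proof (H (- Z.of_nat k - 1)%Z); lra. Qed.

Lemma sum_n_le_Series a N : (forall k, 0 <= a k) -> ex_series a -> sum_n a N <= Series a.
Proof.
  intros Ha He. apply (is_lim_seq_incr_compare (sum_n a)).
  - apply Series_correct in He. exact He.
  - intros n. rewrite sum_Sn, plusR. specialize (Ha (S n)). lra.
Qed.

Lemma Series_zero : Series (fun _ => 0) = 0.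
Proof.
  rewrite (Series_ext (fun _ => 0) (fun n => 0 * 1)) by (intros; ring).
  rewrite Series_scal_l. ring.
Qed.

Lemma zser_nonneg a : (forall x, 0 <= a x) -> zok a -> 0 <= zser a.
Proof.
  intros H Hok. unfold zser. rewrite <- Series_zero. apply Series_le; auto.
  intros; split; [lra| apply pr_nonneg; auto].
Qed.

Lemma nn_bound a l : (forall x, 0 <= a x) -> zok a -> NoDup l -> lsum a l <= zser a.
Proof.
  intros Ha Hok Hl. destruct (win_cover l) as [N HN].
  apply Rle_trans with (lsum a (win (S N))).
  - apply lsum_sub_le; auto. apply nodup_win.
    intros x Hx. apply HN in Hx. apply in_win in Hx. apply in_win. lia.
  - rewrite lsum_win. apply sum_n_le_Series; auto. intros; apply pr_nonneg; auto.
Qed.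

Lemma nn_ok_win a B : (forall x, 0 <= a x) -> (forall N, lsum a (win N) <= B) ->
  zok a /\ zser a <= B.
Proof.
  intros Ha HB.
  assert (Hinc : forall n, sum_n (pr a) n <= sum_n (pr a) (S n)).
  { intros n. rewrite sum_Sn, plusR. pose proof (pr_nonneg a (S n) Ha). lra. }
  assert (Hb : forall n, sum_n (pr a) n <= B) by (intros n; rewrite <- lsum_win; auto).
  destruct (ex_finite_lim_seq_incr _ B Hinc Hb) as [l Hl].
  assert (Hs2 : is_series (pr a) l).
  { unfold is_series. exact Hl. }
  split. exists l; auto.
  unfold zser. rewrite (is_series_unique _ _ Hs2).
  apply (is_lim_seq_le (sum_n (pr a)) (fun _ => B) l B); auto. apply is_lim_seq_const.
Qed.

Lemma nn_ok a B : (forall x, 0 <= a x) -> (forall l, NoDup l -> lsum a l <= B) ->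
  zok a /\ zser a <= B.
Proof. intros Ha HB. apply nn_ok_win; auto. intros; apply HB, nodup_win. Qed.

Lemma nn_le a b : (forall x, 0 <= a x <= b x) -> zok b -> zok a /\ zser a <= zser b.
Proof.
  intros H Hb. apply nn_ok. intros x; apply H.
  intros l Hl. apply Rle_trans with (lsum b l). apply lsum_le; intros; apply H.
  apply nn_bound; auto. intros x; pose proof (H x); lra.
Qed.

Lemma nn_reindex a (f : Z -> Z) : (forall x, 0 <= a x) -> zok a ->
  (forall x y, f x = f y -> x = y) ->
  zok (fun x => a (f x)) /\ zser (fun x => a (f x)) <= zser a.
Proof.
  intros Ha Hok Hf. apply nn_ok. intros; apply Ha.
  intros l Hl. rewrite <- lsum_map. apply nn_bound; auto.
  apply FinFun.Injective_map_NoDup; auto.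
Qed.

Lemma nn_reindex_eq a (f g : Z -> Z) : (forall x, 0 <= a x) -> zok a ->
  (forall x, f (g x) = x) -> (forall x, g (f x) = x) ->
  zok (fun x => a (f x)) /\ zser (fun x => a (f x)) = zser a.
Proof.
  intros Ha Hok H1 H2.
  assert (Hf : forall x y, f x = f y -> x = y).
  { intros x y E. rewrite <- (H2 x), <- (H2 y), E; auto. }
  assert (Hg : forall x y, g x = g y -> x = y).
  { intros x y E. rewrite <- (H1 x), <- (H1 y), E; auto. }
  destruct (nn_reindex a f Ha Hok Hf) as [Hok' Hle].
  destruct (nn_reindex (fun x => a (f x)) g (fun x => Ha _) Hok' Hg) as [_ Hle'].
  split; auto. apply Rle_antisym; auto.
  eapply Rle_trans; [|apply Hle']. right. unfold zser, pr. apply Series_ext; intros. rewrite !H1; auto.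
Qed.

Lemma pr_plus a b k : pr (fun x => a x + b x) k = pr a k + pr b k.
Proof. unfold pr; ring. Qed.

Lemma zok_plus a b : zok a -> zok b -> zok (fun x => a x + b x).
Proof.
  intros Ha Hb. unfold zok. eapply ex_series_ext. intros n; symmetry; apply pr_plus.
  apply (ex_series_plus _ _ Ha Hb).
Qed.

Lemma zser_plus a b : zok a -> zok b -> zser (fun x => a x + b x) = zser a + zser b.
Proof.
  intros Ha Hb. unfold zser. rewrite (Series_ext _ (fun n => pr a n + pr b n)) by apply pr_plus.
  apply Series_plus; auto.
Qed.

Lemma zok_scal c a : zok a -> zok (fun x => c * a x).
Proof.
  intros Ha. unfold zok. eapply ex_series_ext. intros n; unfold pr. instantiate (1 := fun n => scal c (pr a n)).
  simpl. unfold pr, scal; simpl; unfold mult; simpl; ring.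
  apply (@ex_series_scal_l R_AbsRing R_NormedModule c (pr a)); auto.
Qed.

Lemma zser_scal c a : zser (fun x => c * a x) = c * zser a.
Proof.
  unfold zser. rewrite <- Series_scal_l. apply Series_ext; intros; unfold pr; ring.
Qed.

Lemma zok_ext a b : (forall x, a x = b x) -> zok a -> zok b.
Proof. intros H Ha. unfold zok. eapply ex_series_ext; [|exact Ha]. intros; unfold pr; rewrite !H; auto. Qed.

Lemma zser_ext a b : (forall x, a x = b x) -> zser a = zser b.
Proof. intros H. unfold zser. apply Series_ext; intros; unfold pr; rewrite !H; auto. Qed.

Lemma zok_opp a : zok a -> zok (fun x => - a x).
Proof. intros H. apply zok_ext with (fun x => (-1) * a x). intros; ring. apply zok_scal; auto. Qed.

Lemma zok_minus a b : zok a -> zok b -> zok (fun x => a x - b x).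
Proof. intros Ha Hb. apply zok_ext with (fun x => a x + - b x). intros; ring. apply zok_plus; auto. apply zok_opp; auto. Qed.

Lemma zser_minus a b : zok a -> zok b -> zser (fun x => a x - b x) = zser a - zser b.
Proof.
  intros Ha Hb. rewrite (zser_ext _ (fun x => a x + (-1) * b x)) by (intros; ring).
  rewrite zser_plus, zser_scal; auto. ring. apply zok_scal; auto.
Qed.

Lemma zok_abs a : zok (fun x => Rabs (a x)) -> zok a.
Proof.
  intros H. unfold zok. apply (ex_series_le (pr a) (pr (fun x => Rabs (a x)))); auto.
  intros n. unfold norm; simpl. unfold abs; simpl. unfold pr.
  eapply Rle_trans. apply Rabs_triang. lra.
Qed.

Lemma zser_le a b : zok a -> zok b -> (forall x, a x <= b x) -> zser a <= zser b.
Proof.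
  intros Ha Hb H. assert (0 <= zser (fun x => b x - a x)).
  { apply zser_nonneg. intros x; specialize (H x); lra. apply zok_minus; auto. }
  rewrite zser_minus in H0; auto. lra.
Qed.

Lemma zok_dom a b : (forall x, Rabs (a x) <= b x) -> zok b -> zok a.
Proof.
  intros H Hb. apply zok_abs. apply (nn_le _ b); auto. intros x; split; [apply Rabs_pos| auto].
Qed.

Lemma zser_abs a b : (forall x, Rabs (a x) <= b x) -> zok b -> Rabs (zser a) <= zser b.
Proof.
  intros H Hb. assert (Ha : zok a) by (eapply zok_dom; eauto).
  apply Rabs_le. split.
  - assert (zser (fun x => - b x) <= zser a).
    { apply zser_le; auto. apply zok_opp; auto. intros x; specialize (H x). apply Rabs_le_between in H; lra. }
    rewrite (zser_ext _ (fun x => (-1) * b x)) in H0 by (intros; ring). rewrite zser_scal in H0. lra.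
  - apply zser_le; auto. intros x; specialize (H x). apply Rabs_le_between in H; lra.
Qed.

Lemma zok_zero : zok (fun _ => 0).
Proof.
  assert (H : forall l : list Z, NoDup l -> lsum (fun _ => 0) l <= 0).
  { intros l _; induction l; simpl; lra. }
  exact (proj1 (nn_ok (fun _ => 0) 0 (fun _ => Rle_refl 0) H)).
Qed.

Lemma zser_zero : zser (fun _ => 0) = 0.
Proof. rewrite (zser_ext _ (fun _ => 0 * 0)) by (intros; ring). rewrite zser_scal; ring. Qed.

Lemma zser_lsum (X : Z -> Z -> R) l : (forall n, zok (X n)) ->
  zok (fun m => lsum (fun n => X n m) l) /\
  zser (fun m => lsum (fun n => X n m) l) = lsum (fun n => zser (X n)) l.
Proof.
  intros H. induction l as [|x l [IH1 IH2]]; simpl.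
  - split. apply zok_zero. apply zser_zero.
  - split. apply zok_plus; auto. rewrite zser_plus; auto. rewrite IH2; auto.
Qed.

Lemma lsum_restrict a w L : NoDup w -> NoDup L -> (forall x, In x L -> In x w) ->
  (forall y, In y w -> ~ In y L -> a y = 0) -> lsum a w = lsum a L.
Proof.
  revert L. induction w as [|x w IH]; intros L Hw HL Hinc Hz.
  - destruct L as [|y L]; auto. exfalso; apply (Hinc y); left; auto.
  - inversion Hw; subst. simpl.
    destruct (in_dec Z.eq_dec x L) as [Hx|Hx].
    + destruct (in_split _ _ Hx) as [L1 [L2 ->]].
      rewrite lsum_app. simpl.
      rewrite (IH (L1 ++ L2)); auto.
      * rewrite lsum_app. ring.
      * eapply NoDup_remove_1; eauto.
      * intros y Hy. assert (Hy' : In y (L1 ++ x :: L2)).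
        { apply in_app_or in Hy; apply in_or_app; simpl; tauto. }
        apply Hinc in Hy'. destruct Hy' as [<-|?]; auto.
        exfalso. apply (NoDup_remove_2 _ _ _ HL). auto.
      * intros y Hy Hn. apply Hz. right; auto. intros Hy'.
        apply in_app_or in Hy'. destruct Hy' as [?|[<-|?]]; auto.
        apply Hn; apply in_or_app; auto. apply Hn; apply in_or_app; auto.
    + rewrite (Hz x); [|left; auto| auto].
      rewrite (IH L); auto. ring.
      intros y Hy. destruct (Hinc y Hy) as [<-|?]; auto. contradiction.
      intros y Hy Hn; apply Hz; auto. right; auto.
Qed.

Lemma zser_fin a L : NoDup L -> (forall y, ~ In y L -> a y = 0) ->
  zok a /\ zser a = lsum a L.
Proof.
  intros HL Hz. destruct (win_cover L) as [N HN].
  assert (Hs : is_series (pr a) (lsum a L)).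
  { unfold is_series. apply (is_lim_seq_ext_loc (fun _ => lsum a L) _ (Finite (lsum a L))).
    exists N. intros n Hn. rewrite <- lsum_win. symmetry. apply lsum_restrict; auto.
    apply nodup_win. intros x Hx. apply HN in Hx. apply in_win in Hx. apply in_win. lia.
    apply is_lim_seq_const. }
  split. exists (lsum a L); auto. apply is_series_unique; auto.
Qed.

Lemma cs_step x0 y0 P X Y : 0 <= X -> 0 <= Y -> P ^ 2 <= X * Y ->
  (x0 * y0 + P) ^ 2 <= (x0 ^ 2 + X) * (y0 ^ 2 + Y).
Proof.
  intros HX HY HP.
  assert (2 * x0 * y0 * P <= x0 ^ 2 * Y + y0 ^ 2 * X).
  { destruct (Req_dec X 0) as [E|E].
    - subst. assert (P = 0) by (apply Rle_antisym; nra). subst. nra.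
    - assert (0 < X) by lra.
      assert (X * (x0 ^ 2 * Y + y0 ^ 2 * X - 2 * x0 * y0 * P) >= 0).
      { assert (0 <= (x0 * P - y0 * X) ^ 2) by apply pow2_ge_0.
        assert (0 <= x0 ^ 2 * (X * Y - P ^ 2)) by (apply Rmult_le_pos; [apply pow2_ge_0| lra]). nra. }
      nra. }
  nra.
Qed.

Lemma lsum_cs x y l : (lsum (fun n => x n * y n) l) ^ 2 <= lsum (fun n => x n ^ 2) l * lsum (fun n => y n ^ 2) l.
Proof.
  induction l as [|a l IH]; simpl.
  - lra.
  - apply cs_step; auto. apply lsum_nonneg; intros; nra. apply lsum_nonneg; intros; nra.
Qed.

Lemma sq_le_sqrt S A B : 0 <= A -> 0 <= B -> S ^ 2 <= A * B -> S <= sqrt A * sqrt B.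
Proof.
  intros HA HB H. rewrite <- sqrt_mult; auto.
  destruct (Rle_dec S 0). apply Rle_trans with 0; auto. apply sqrt_pos.
  rewrite <- (sqrt_pow2 S) by lra. apply sqrt_le_1_alt. lra.
Qed.

Lemma zcs x y : zok (fun n => x n ^ 2) -> zok (fun n => y n ^ 2) ->
  zok (fun n => Rabs (x n) * Rabs (y n)) /\
  zser (fun n => Rabs (x n) * Rabs (y n)) <= sqrt (zser (fun n => x n ^ 2)) * sqrt (zser (fun n => y n ^ 2)).
Proof.
  intros Hx Hy. apply nn_ok.
  intros; apply Rmult_le_pos; apply Rabs_pos.
  intros l Hl.
  apply Rle_trans with (sqrt (lsum (fun n => x n ^ 2) l) * sqrt (lsum (fun n => y n ^ 2) l)).
  - apply sq_le_sqrt. apply lsum_nonneg; intros; nra. apply lsum_nonneg; intros; nra.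
    rewrite (lsum_ext (fun n => x n ^ 2) (fun n => Rabs (x n) ^ 2)) by (intros; rewrite pow2_abs; auto).
    rewrite (lsum_ext (fun n => y n ^ 2) (fun n => Rabs (y n) ^ 2)) by (intros; rewrite pow2_abs; auto).
    apply lsum_cs.
  - apply Rmult_le_compat; try apply sqrt_pos; apply sqrt_le_1_alt; apply nn_bound; auto; intros; nra.
Qed.

Lemma exp_mono x y : x <= y -> exp x <= exp y.
Proof. intros [H|H]. left; apply exp_increasing; auto. subst; lra. Qed.

Lemma ln_le_sub1 y : 0 < y -> ln y <= y - 1.
Proof. intros H. pose proof (exp_ineq1_le (ln y)). rewrite exp_ln in H0; auto. lra. Qed.

Lemma ln_ge0 y : 1 <= y -> 0 <= ln y.
Proof.
  intros [H|H]. rewrite <- ln_1. left; apply ln_increasing; lra. subst; rewrite ln_1; lra.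
Qed.

Section PS.
Variable s : R.
Hypothesis hs : 1/2 < s.

Let q := 2 * s - 1.
Definition gq (x : R) := exp (- q * ln x).
Definition tq (k : nat) := exp (- (2 * s) * ln (INR k)).

Lemma tele (x : R) : 2 <= x -> q * exp (- (2 * s) * ln x) <= gq (x - 1) - gq x.
Proof.
  intros Hx. unfold gq.
  set (d := ln x - ln (x - 1)).
  assert (Hd : 1 / x <= d).
  { unfold d. pose proof (ln_le_sub1 ((x - 1) / x)).
    rewrite ln_div in H by lra.
    assert ((x - 1) / x - 1 = - (1 / x)) by (field; lra).
    assert (0 < (x - 1) / x) by (apply Rdiv_lt_0_compat; lra). lra. }
  assert (E1 : - q * ln (x - 1) = - q * ln x + q * d) by (unfold d; ring).
  rewrite E1, exp_plus.
  assert (Hq : 0 < q) by (unfold q; lra).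
  assert (1 + q * d <= exp (q * d)) by apply exp_ineq1_le.
  assert (E2 : - (2 * s) * ln x = - q * ln x + - ln x) by (unfold q; ring).
  rewrite E2, exp_plus. rewrite exp_Ropp, exp_ln by lra.
  assert (0 < exp (- q * ln x)) by apply exp_pos.
  assert (q / x <= q * d).
  { replace (q / x) with (q * (1 / x)) by (field; lra). apply Rmult_le_compat_l; lra. }
  assert (exp (- q * ln x) * (1 + q / x) <= exp (- q * ln x) * exp (q * d)).
  { apply Rmult_le_compat_l; lra. }
  replace (q * (exp (- q * ln x) * / x)) with (exp (- q * ln x) * (1 + q / x) - exp (- q * ln x)) by (field; lra).
  lra.
Qed.

Fixpoint Tsum (M : nat) : R := match M with O => 0 | S M' => Tsum M' + tq (S M') end.

Lemma Tsum_bound M : Tsum M <= 1 + 1 / q.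
Proof.
  assert (Hq : 0 < q) by (unfold q; lra).
  assert (H : forall K, (1 <= K)%nat -> Tsum K <= 1 + (1 - gq (INR K)) / q).
  { clear M. intros K; induction K as [|M IH]; intros HM. lia.
    destruct M as [|M].
    - simpl. unfold tq, gq. simpl. rewrite ln_1. replace (- (2 * s) * 0) with 0 by ring.
      replace (- q * 0) with 0 by ring. rewrite exp_0. unfold Rdiv; lra.
    - specialize (IH ltac:(lia)). change (Tsum (S (S M))) with (Tsum (S M) + tq (S (S M))).
      pose proof (tele (INR (S (S M)))). rewrite !S_INR in *.
      assert (HH : q * tq (S (S M)) <= gq (INR M + 1) - gq (INR M + 1 + 1)).
      { unfold tq. rewrite !S_INR. replace (INR M + 1) with (INR M + 1 + 1 - 1) at 2 by ring.
        apply H. pose proof (pos_INR M); lra. }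
      assert (tq (S (S M)) <= (gq (INR M + 1) - gq (INR M + 1 + 1)) / q).
      { apply Rmult_le_reg_l with q; auto. replace (q * ((gq (INR M + 1) - gq (INR M + 1 + 1)) / q)) with (gq (INR M + 1) - gq (INR M + 1 + 1)) by (field; lra). auto. }
      unfold Rdiv in *. lra. }
  destruct M. simpl. assert (0 < 1/q) by (apply Rdiv_lt_0_compat; lra). lra.
  eapply Rle_trans. apply H; lia. assert (0 < gq (INR (S M))) by apply exp_pos.
  unfold Rdiv. assert (0 < / q) by (apply Rinv_0_lt_compat; lra). nra.
Qed.

End PS.

Section W.
Variable s : R.
Hypothesis hs : 1/2 < s.

Lemma weight_exp n : weight s n = exp (s * ln (IZR n ^ 2 + 1)).
Proof. reflexivity. Qed.

Lemma weight_ge1 n : 1 <= weight s n.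
Proof.
  rewrite weight_exp. apply Rle_trans with (exp 0). rewrite exp_0; lra. apply exp_mono.
  apply Rmult_le_pos. lra. apply ln_ge0.
  assert (0 <= IZR n ^ 2) by apply pow2_ge_0. lra.
Qed.

Lemma weight_pos n : 0 < weight s n.
Proof. pose proof (weight_ge1 n); lra. Qed.

Lemma weight_opp n : weight s (- n) = weight s n.
Proof. rewrite !weight_exp, opp_IZR. f_equal. f_equal. f_equal. ring. Qed.

Lemma inv_weight_le (n : Z) (x : R) : 1 <= x -> IZR n ^ 2 = x ^ 2 ->
  / weight s n <= exp (- (2 * s) * ln x).
Proof.
  intros Hx E. rewrite weight_exp, <- exp_Ropp, E. apply exp_mono.
  assert (ln (x ^ 2) <= ln (x ^ 2 + 1)).
  { left; apply ln_increasing; nra. }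
  rewrite ln_pow in H by lra. simpl INR in H.
  assert (0 <= ln x) by (rewrite <- ln_1; destruct Hx as [Hx|Hx]; [left; apply ln_increasing; lra| subst; lra]).
  nra.
Qed.

Lemma win_inv_weight N : lsum (fun n => / weight s n) (win (S N)) <= 1 + Tsum s N + Tsum s (S N).
Proof.
  induction N.
  - cbn [win lsum Tsum]. unfold tq. simpl Z.of_nat.
    assert (/ weight s 0 = 1). { rewrite weight_exp. simpl. rewrite Rmult_0_l, Rplus_0_l, ln_1, Rmult_0_r, exp_0. lra. }
    assert (/ weight s (- 0 - 1) <= exp (- (2 * s) * ln (INR 1))).
    { apply inv_weight_le. simpl; lra. simpl. ring. }
    lra.
  - change (lsum (fun n => / weight s n) (win (S (S N)))) with
      (/ weight s (Z.of_nat (S N)) + (/ weight s (- Z.of_nat (S N) - 1) + lsum (fun n => / weight s n) (win (S N)))).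
    change (Tsum s (S (S N))) with (Tsum s (S N) + tq s (S (S N))).
    change (Tsum s (S N)) with (Tsum s N + tq s (S N)) in *.
    assert (/ weight s (Z.of_nat (S N)) <= tq s (S N)).
    { unfold tq. apply inv_weight_le. rewrite S_INR; pose proof (pos_INR N); lra. rewrite <- INR_IZR_INZ; auto. }
    assert (/ weight s (- Z.of_nat (S N) - 1) <= tq s (S (S N))).
    { unfold tq. apply inv_weight_le. rewrite !S_INR; pose proof (pos_INR N); lra.
      rewrite minus_IZR, opp_IZR, <- INR_IZR_INZ, !S_INR. ring. }
    lra.
Qed.

Lemma aux_win : forall N, lsum (fun n => / weight s n) (win N) <= 1 + 2 * (1 + 1 / (2 * s - 1)).
Proof.
  - intros N. destruct N. simpl. assert (0 < 1 / (2 * s - 1)) by (apply Rdiv_lt_0_compat; lra). lra.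
    eapply Rle_trans. apply win_inv_weight.
    pose proof (Tsum_bound s hs N). pose proof (Tsum_bound s hs (S N)). lra.
Qed.

Lemma zok_inv_weight : zok (fun n => / weight s n).
Proof.
  apply (proj1 (nn_ok_win _ (1 + 2 * (1 + 1 / (2 * s - 1))) ltac:(intros x; left; apply Rinv_0_lt_compat, weight_pos) ltac:(intros N; apply aux_win))).
Qed.
Lemma weight_split n m : weight s n <= Rpower 4 s * (weight s m + weight s (n - m)).
Proof.
  assert (H : IZR n ^ 2 + 1 <= 4 * (IZR m ^ 2 + 1) \/ IZR n ^ 2 + 1 <= 4 * (IZR (n - m) ^ 2 + 1)).
  { rewrite minus_IZR. destruct (Rle_dec (IZR m ^ 2) ((IZR n - IZR m) ^ 2)); [right|left]; nra. }
  assert (Hm := weight_pos m). assert (Hnm := weight_pos (n - m)).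
  assert (H4 : 0 < Rpower 4 s) by apply exp_pos.
  destruct H as [H|H].
  - apply Rle_trans with (Rpower 4 s * weight s m); [|nra].
    unfold weight. rewrite Rpower_mult_distr by (try lra; pose proof (pow2_ge_0 (IZR m)); lra).
    apply Rle_Rpower_l. lra. split; auto. pose proof (pow2_ge_0 (IZR n)); lra.
  - apply Rle_trans with (Rpower 4 s * weight s (n - m)); [|nra].
    unfold weight. rewrite Rpower_mult_distr by (try lra; pose proof (pow2_ge_0 (IZR (n - m))); lra).
    apply Rle_Rpower_l. lra. split; auto. pose proof (pow2_ge_0 (IZR n)); lra.
Qed.

Definition Kw := sqrt (Rpower 4 s).

Lemma sqrt_weight_split n m : sqrt (weight s n) <= Kw * (sqrt (weight s m) + sqrt (weight s (n - m))).
Proof.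
  unfold Kw. assert (Hm := weight_pos m). assert (Hnm := weight_pos (n - m)).
  assert (H4 : 0 < Rpower 4 s) by apply exp_pos.
  eapply Rle_trans. apply sqrt_le_1_alt. apply (weight_split n m).
  rewrite sqrt_mult by lra. apply Rmult_le_compat_l. apply sqrt_pos.
  apply Rsqr_incr_0_var. rewrite Rsqr_plus, !Rsqr_sqrt by lra.
  pose proof (sqrt_pos (weight s m)). pose proof (sqrt_pos (weight s (n - m))). nra.
  pose proof (sqrt_pos (weight s m)). pose proof (sqrt_pos (weight s (n - m))). lra.
Qed.

Lemma Kw_pos : 0 < Kw.
Proof. unfold Kw. apply sqrt_lt_R0, exp_pos. Qed.

End W.

Definition cok (a : Z -> C) : Prop := zok (fun n => Cmod (a n)).

Lemma sumZ_eq a : sumZ a = (zser (fun n => Re (a n)), zser (fun n => Im (a n))).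
Proof. reflexivity. Qed.

Lemma Cmod_nonneg c : 0 <= Cmod c.
Proof. apply Cmod_ge_0. Qed.

Lemma cok_re a : cok a -> zok (fun n => Re (a n)).
Proof. intros H. apply (zok_dom _ _ (fun n => re_le_Cmod (a n)) H). Qed.

Lemma im_le_Cmod c : Rabs (Im c) <= Cmod c.
Proof.
  unfold Cmod. rewrite <- (sqrt_pow2 (Rabs (Im c))) by apply Rabs_pos.
  apply sqrt_le_1_alt. rewrite pow2_abs. pose proof (pow2_ge_0 (fst c)). unfold Im. lra.
Qed.

Lemma cok_im a : cok a -> zok (fun n => Im (a n)).
Proof. intros H. apply (zok_dom _ _ (fun n => im_le_Cmod (a n)) H). Qed.

Lemma cok_dom a b : (forall n, Cmod (a n) <= b n) -> zok b -> cok a.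
Proof.
  intros H Hb. unfold cok. apply (proj1 (nn_le _ _ (fun n => conj (Cmod_nonneg _) (H n)) Hb)).
Qed.

Lemma cok_ext a b : (forall n, a n = b n) -> cok a -> cok b.
Proof. intros H Ha. unfold cok. apply zok_ext with (fun n => Cmod (a n)); auto. intros; rewrite H; auto. Qed.

Lemma sumZ_ext a b : (forall n, a n = b n) -> sumZ a = sumZ b.
Proof. intros H. rewrite !sumZ_eq. f_equal; apply zser_ext; intros; rewrite H; auto. Qed.

Lemma cok_plus a b : cok a -> cok b -> cok (fun n => (a n + b n)%C).
Proof.
  intros Ha Hb. apply cok_dom with (fun n => Cmod (a n) + Cmod (b n)).
  intros; apply Cmod_triangle. apply zok_plus; auto.
Qed.

Lemma cok_scal c a : cok a -> cok (fun n => (c * a n)%C).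
Proof.
  intros Ha. apply cok_dom with (fun n => Cmod c * Cmod (a n)).
  intros; rewrite Cmod_mult; lra. apply zok_scal; auto.
Qed.

Lemma cok_scal_r c a : cok a -> cok (fun n => (a n * c)%C).
Proof.
  intros Ha. apply cok_dom with (fun n => Cmod c * Cmod (a n)).
  intros; rewrite Cmod_mult; lra. apply zok_scal; auto.
Qed.

Lemma sumZ_plus a b : cok a -> cok b -> sumZ (fun n => (a n + b n)%C) = (sumZ a + sumZ b)%C.
Proof.
  intros Ha Hb. rewrite !sumZ_eq. unfold Cplus; simpl.
  f_equal.
  - rewrite <- zser_plus by (apply cok_re; auto). apply zser_ext; intros; reflexivity.
  - rewrite <- zser_plus by (apply cok_im; auto). apply zser_ext; intros; reflexivity.
Qed.

Lemma sumZ_scal c a : cok a -> sumZ (fun n => (c * a n)%C) = (c * sumZ a)%C.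
Proof.
  intros Ha. rewrite !sumZ_eq. destruct c as [cr ci]. unfold Cmult; simpl.
  pose proof (cok_re a Ha). pose proof (cok_im a Ha).
  f_equal.
  - rewrite (zser_ext _ (fun n => cr * Re (a n) + (- ci) * Im (a n))) by (intros; unfold Re, Im; simpl; ring).
    rewrite zser_plus, !zser_scal by (apply zok_scal; auto). ring.
  - rewrite (zser_ext _ (fun n => cr * Im (a n) + ci * Re (a n))) by (intros; unfold Re, Im; simpl; ring).
    rewrite zser_plus, !zser_scal by (apply zok_scal; auto). ring.
Qed.

Lemma sumZ_scal_r c a : cok a -> sumZ (fun n => (a n * c)%C) = (sumZ a * c)%C.
Proof.
  intros Ha. rewrite (sumZ_ext _ (fun n => (c * a n)%C)) by (intros; apply Cmult_comm).
  rewrite sumZ_scal; auto. apply Cmult_comm.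
Qed.

Lemma sumZ_opp a : cok a -> sumZ (fun n => (- a n)%C) = (- sumZ a)%C.
Proof.
  intros Ha. rewrite (sumZ_ext _ (fun n => (RtoC (-1) * a n)%C)).
  rewrite sumZ_scal; auto. apply injective_projections; simpl; ring.
  intros; apply injective_projections; simpl; ring.
Qed.

Lemma Cmod_sumZ a : cok a -> Cmod (sumZ a) <= zser (fun n => Cmod (a n)).
Proof.
  intros Ha. set (S := sumZ a). set (Z0 := zser (fun n => Cmod (a n))).
  assert (HZ : 0 <= Z0) by (apply zser_nonneg; auto; intros; apply Cmod_nonneg).
  assert (Hsq : Cmod S ^ 2 <= Cmod S * Z0).
  { rewrite Cmod2_alt.
    assert (E : Re S ^ 2 + Im S ^ 2 = zser (fun n => Re S * Re (a n) + Im S * Im (a n))).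
    { rewrite zser_plus, !zser_scal by (first [apply zok_scal, cok_re; auto | apply zok_scal, cok_im; auto]).
      change (zser (fun n => Re (a n))) with (Re S). change (zser (fun n => Im (a n))) with (Im S). ring. }
    rewrite E. unfold Z0. rewrite <- zser_scal.
    apply zser_le. apply zok_plus; apply zok_scal; [apply cok_re|apply cok_im]; auto.
    apply zok_scal; auto.
    intros n. unfold Cmod, Re, Im. generalize (fst S) (snd S). intros u v.
    destruct (a n) as [x y]. cbn [fst snd]. clear E.
    pose proof (pow2_ge_0 u). pose proof (pow2_ge_0 v). pose proof (pow2_ge_0 x). pose proof (pow2_ge_0 y).
    pose proof (pow2_ge_0 (u * y - v * x)).
    apply sq_le_sqrt; [lra|lra|nra]. }
  pose proof (Cmod_nonneg S).
  destruct (Req_dec (Cmod S) 0) as [E|E]. lra.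
  apply Rmult_le_reg_l with (Cmod S). lra. nra.
Qed.

Lemma sumZ_one (a : Z -> C) p : (forall y, y <> p -> a y = 0%C) -> cok a /\ sumZ a = a p.
Proof.
  intros H.
  assert (Hc : cok a).
  { unfold cok. apply (proj1 (zser_fin (fun n => Cmod (a n)) (p :: nil) ltac:(repeat constructor; auto) ltac:(intros y Hy; cbv beta; rewrite H; [apply Cmod_0| intros ->; apply Hy; left; auto]))). }
  split; auto. rewrite sumZ_eq.
  rewrite (proj2 (zser_fin (fun n => Re (a n)) (p :: nil) ltac:(repeat constructor; auto) ltac:(intros y Hy; cbv beta; rewrite H; [reflexivity| intros ->; apply Hy; left; auto]))).
  rewrite (proj2 (zser_fin (fun n => Im (a n)) (p :: nil) ltac:(repeat constructor; auto) ltac:(intros y Hy; cbv beta; rewrite H; [reflexivity| intros ->; apply Hy; left; auto]))).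
  apply injective_projections; simpl; unfold Re, Im; ring.
Qed.

Lemma sumZ_two (a : Z -> C) p q : p <> q -> (forall y, y <> p -> y <> q -> a y = 0%C) -> cok a /\ sumZ a = (a p + a q)%C.
Proof.
  intros Hpq H.
  assert (HL : NoDup (p :: q :: nil)).
  { constructor. simpl; intros [E|[]]; auto. constructor; auto. constructor. }
  assert (Hz : forall y, ~ In y (p :: q :: nil) -> a y = 0%C).
  { intros y Hy. apply H; intros ->; apply Hy; simpl; auto. }
  assert (Hc : cok a).
  { unfold cok. apply (proj1 (zser_fin (fun n => Cmod (a n)) _ HL ltac:(intros y Hy; cbv beta; rewrite Hz; [apply Cmod_0| auto]))). }
  split; auto. rewrite sumZ_eq.
  rewrite (proj2 (zser_fin (fun n => Re (a n)) _ HL ltac:(intros y Hy; cbv beta; rewrite Hz; [reflexivity| auto]))).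
  rewrite (proj2 (zser_fin (fun n => Im (a n)) _ HL ltac:(intros y Hy; cbv beta; rewrite Hz; [reflexivity| auto]))).
  apply injective_projections; simpl; unfold Re, Im; ring.
Qed.

Lemma sumZ_real r : zok r -> sumZ (fun n => RtoC (r n)) = RtoC (zser r).
Proof.
  intros H. rewrite sumZ_eq. simpl. unfold RtoC. f_equal.
  unfold Im; simpl. apply zser_zero.
Qed.

Lemma cok_real r : zok (fun n => Rabs (r n)) -> cok (fun n => RtoC (r n)).
Proof. intros H. apply cok_ext with (fun n => RtoC (r n)); auto. unfold cok. eapply zok_ext; [|exact H]. intros; rewrite Cmod_R; auto. Qed.

Section E.
Variable s : R.
Hypothesis hs : 1/2 < s.

Definition Wv (v : seqZ) (n : Z) : R := weight s n * Cmod (v n) ^ 2.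

Lemma in_Hs_eq v : in_Hs s v <-> zok (Wv v).
Proof. reflexivity. Qed.

Lemma hs_norm_eq v : hs_norm s v = sqrt (zser (Wv v)).
Proof. reflexivity. Qed.

Lemma Wv_nonneg v n : 0 <= Wv v n.
Proof. unfold Wv. apply Rmult_le_pos. left; apply (weight_pos s hs). apply pow2_ge_0. Qed.

Lemma hsn_nonneg v : 0 <= hs_norm s v.
Proof. apply sqrt_pos. Qed.

Lemma zser_Wv_nonneg v : in_Hs s v -> 0 <= zser (Wv v).
Proof. intros H. apply zser_nonneg; auto. apply Wv_nonneg. Qed.

Lemma hsn_sq v : in_Hs s v -> hs_norm s v ^ 2 = zser (Wv v).
Proof. intros H. rewrite hs_norm_eq. rewrite pow2_sqrt; auto. apply zser_Wv_nonneg; auto. Qed.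

Lemma Hs_dom u v c : 0 <= c -> (forall n, Cmod (u n) <= c * Cmod (v n)) -> in_Hs s v ->
  in_Hs s u /\ hs_norm s u <= c * hs_norm s v.
Proof.
  intros Hc H Hv.
  assert (Hle : forall n, 0 <= Wv u n <= c ^ 2 * Wv v n).
  { intros n. split. apply Wv_nonneg. unfold Wv. pose proof (weight_pos s hs n).
    pose proof (Cmod_nonneg (u n)). specialize (H n).
    assert (Cmod (u n) ^ 2 <= (c * Cmod (v n)) ^ 2) by (apply pow_incr; lra).
    rewrite Rpow_mult_distr in H2. nra. }
  destruct (nn_le _ _ Hle) as [Hok Hb]. apply zok_scal; auto.
  split; auto. rewrite zser_scal in Hb. rewrite !hs_norm_eq.
  rewrite <- (sqrt_pow2 c) by auto. rewrite <- sqrt_mult. apply sqrt_le_1_alt; auto.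
  nra. apply zser_Wv_nonneg; auto.
Qed.

Lemma Hs_sadd u v : in_Hs s u -> in_Hs s v ->
  in_Hs s (sadd u v) /\ hs_norm s (sadd u v) <= 2 * (hs_norm s u + hs_norm s v).
Proof.
  intros Hu Hv.
  assert (Hle : forall n, 0 <= Wv (sadd u v) n <= 2 * Wv u n + 2 * Wv v n).
  { intros n. split. apply Wv_nonneg. unfold Wv, sadd. pose proof (weight_pos s hs n).
    pose proof (Cmod_triangle (u n) (v n)). pose proof (Cmod_nonneg (u n + v n)%C).
    pose proof (Cmod_nonneg (u n)). pose proof (Cmod_nonneg (v n)).
    assert (Cmod (u n + v n)%C ^ 2 <= 2 * Cmod (u n) ^ 2 + 2 * Cmod (v n) ^ 2).
    { apply Rle_trans with ((Cmod (u n) + Cmod (v n)) ^ 2). apply pow_incr; lra.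
      pose proof (pow2_ge_0 (Cmod (u n) - Cmod (v n))). nra. }
    nra. }
  assert (Hz : zok (fun n => 2 * Wv u n + 2 * Wv v n)) by (apply zok_plus; apply zok_scal; auto).
  destruct (nn_le _ _ Hle Hz) as [Hok Hb].
  split; auto. rewrite zser_plus, !zser_scal in Hb by (apply zok_scal; auto).
  rewrite !hs_norm_eq.
  pose proof (zser_Wv_nonneg u Hu). pose proof (zser_Wv_nonneg v Hv).
  set (A := zser (Wv u)) in *. set (B := zser (Wv v)) in *.
  apply Rle_trans with (sqrt (2 * A + 2 * B)). apply sqrt_le_1_alt; auto.
  pose proof (sqrt_pos A). pose proof (sqrt_pos B).
  rewrite <- (sqrt_pow2 (2 * (sqrt A + sqrt B))) by lra.
  apply sqrt_le_1_alt.
  replace ((2 * (sqrt A + sqrt B)) ^ 2) with (4 * (sqrt A ^ 2 + sqrt B ^ 2) + 8 * sqrt A * sqrt B) by ring.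
  rewrite !pow2_sqrt by auto. nra.
Qed.

Lemma Hs_sscal a u : in_Hs s u -> in_Hs s (sscal a u) /\ hs_norm s (sscal a u) <= Rabs a * hs_norm s u.
Proof.
  intros Hu. apply Hs_dom; auto. apply Rabs_pos. intros n. unfold sscal. rewrite Cmod_mult, Cmod_R. lra.
Qed.

Lemma Hs_ssub u v : in_Hs s u -> in_Hs s v -> in_Hs s (ssub u v).
Proof.
  intros Hu Hv. assert (E : ssub u v = sadd u (sscal (-1) v)).
  { apply functional_extensionality; intros n. unfold ssub, sadd, sscal.
    apply injective_projections; simpl; ring. }
  rewrite E. apply Hs_sadd; auto. apply Hs_sscal; auto.
Qed.

Lemma Hs_zero : in_Hs s szero /\ hs_norm s szero = 0.
Proof.
  assert (E : forall n, Wv szero n = 0). { intros n; unfold Wv, szero. rewrite Cmod_0. ring. }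
  split. apply in_Hs_eq, zok_ext with (fun _ => 0); [intros; rewrite E; auto| apply zok_zero].
  rewrite hs_norm_eq, (zser_ext _ (fun _ => 0)) by auto. rewrite zser_zero. apply sqrt_0.
Qed.

Lemma Hs_pt v n : in_Hs s v -> Cmod (v n) <= hs_norm s v.
Proof.
  intros Hv. rewrite hs_norm_eq. rewrite <- (sqrt_pow2 (Cmod (v n))) by apply Cmod_nonneg.
  apply sqrt_le_1_alt.
  apply Rle_trans with (Wv v n).
  - unfold Wv. pose proof (weight_ge1 s hs n). pose proof (pow2_ge_0 (Cmod (v n))). nra.
  - pose proof (nn_bound (Wv v) (n :: nil) (Wv_nonneg v) Hv ltac:(repeat constructor; auto)).
    simpl in H. lra.
Qed.

Definition Kl1 := sqrt (zser (fun n => / weight s n)).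

Lemma Kl1_nonneg : 0 <= Kl1.
Proof. apply sqrt_pos. Qed.

Lemma Hs_l1 v : in_Hs s v -> zok (fun n => Cmod (v n)) /\ zser (fun n => Cmod (v n)) <= Kl1 * hs_norm s v.
Proof.
  intros Hv.
  set (x := fun n => sqrt (weight s n) * Cmod (v n)).
  set (y := fun n => / sqrt (weight s n)).
  assert (Ex : forall n, x n ^ 2 = Wv v n).
  { intros n; unfold x, Wv. rewrite Rpow_mult_distr, pow2_sqrt; auto. left; apply weight_pos; auto. }
  assert (Ey : forall n, y n ^ 2 = / weight s n).
  { intros n; unfold y. rewrite <- Rinv_pow, pow2_sqrt; auto. left; apply weight_pos; auto.
    apply Rgt_not_eq, sqrt_lt_R0, weight_pos; auto. }
  assert (Exy : forall n, Rabs (x n) * Rabs (y n) = Cmod (v n)).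
  { intros n. unfold x, y. assert (0 < sqrt (weight s n)) by (apply sqrt_lt_R0, weight_pos; auto).
    rewrite Rabs_mult, !Rabs_pos_eq. field. lra. left; apply Rinv_0_lt_compat; lra. apply Cmod_nonneg. lra. }
  destruct (zcs x y) as [H1 H2].
  - apply zok_ext with (Wv v); [intros n; rewrite Ex; auto| auto].
  - apply zok_ext with (fun n => / weight s n); [intros n; rewrite Ey; auto| apply zok_inv_weight; auto].
  - split. apply zok_ext with (fun n => Rabs (x n) * Rabs (y n)); auto.
    rewrite (zser_ext _ (fun n => Rabs (x n) * Rabs (y n))) by (intros; rewrite Exy; auto).
    eapply Rle_trans; [exact H2|].
    rewrite (zser_ext (fun n => x n ^ 2) (Wv v)) by auto.
    rewrite (zser_ext (fun n => y n ^ 2) (fun n => / weight s n)) by auto.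
    unfold Kl1. rewrite hs_norm_eq. lra.
Qed.

Lemma Cmod_cis' x : Cmod (cos x, - sin x) = 1.
Proof.
  unfold Cmod. simpl. pose proof (sin2_cos2 x). unfold Rsqr in H.
  replace (cos x * (cos x * 1) + - sin x * (- sin x * 1)) with 1 by nra. apply sqrt_1.
Qed.

Lemma Cmod_H1 tau v n : Cmod (H1 tau v n) = Cmod (v n).
Proof. unfold H1. rewrite Cmod_mult, Cmod_cis'. ring. Qed.

Lemma Hs_H1 tau v : in_Hs s v -> in_Hs s (H1 tau v) /\ hs_norm s (H1 tau v) = hs_norm s v.
Proof.
  intros Hv. assert (E : forall n, Wv (H1 tau v) n = Wv v n) by (intros; unfold Wv; rewrite Cmod_H1; auto).
  split. apply in_Hs_eq, zok_ext with (Wv v); auto.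
  rewrite !hs_norm_eq, (zser_ext _ (Wv v)); auto.
Qed.

Lemma Hs_sconj v : in_Hs s v -> in_Hs s (sconj v) /\ hs_norm s (sconj v) = hs_norm s v.
Proof.
  intros Hv. assert (E : forall n, Wv (sconj v) n = Wv v (- n)).
  { intros; unfold Wv, sconj. rewrite Cmod_conj, <- (weight_opp s n) at 1. auto. }
  destruct (nn_reindex_eq (Wv v) Z.opp Z.opp (Wv_nonneg v) Hv) as [H1 H2]; try (intros; lia).
  split. apply in_Hs_eq, zok_ext with (fun n => Wv v (- n)); [intros n; rewrite E; auto| auto].
  rewrite !hs_norm_eq, (zser_ext _ (fun n => Wv v (- n))) by auto. rewrite H2; auto.
Qed.

End E.

Lemma nn_pt a n : (forall x, 0 <= a x) -> zok a -> a n <= zser a.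
Proof.
  intros Ha Hok. pose proof (nn_bound a (n :: nil) Ha Hok ltac:(repeat constructor; auto)). simpl in H; lra.
Qed.

Section Young.
Variables f g : Z -> R.
Hypothesis f_nn : forall x, 0 <= f x.
Hypothesis g_nn : forall x, 0 <= g x.
Hypothesis f_ok : zok f.
Hypothesis g2_ok : zok (fun x => g x ^ 2).

Definition Yc (n : Z) := zser (fun m => f m * g (n - m)).

Lemma Y_aux_ok n : zok (fun m => f m * g (n - m) ^ 2).
Proof.
  assert (H : forall m, 0 <= f m * g (n - m) ^ 2 <= zser (fun x => g x ^ 2) * f m).
  { intros m. split. apply Rmult_le_pos; auto. apply pow2_ge_0.
    pose proof (nn_pt (fun x => g x ^ 2) (n - m) (fun x => pow2_ge_0 _) g2_ok). cbv beta in H.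
    pose proof (f_nn m). nra. }
  apply (proj1 (nn_le _ _ H (zok_scal _ _ f_ok))).
Qed.

Lemma Y1 n : zok (fun m => f m * g (n - m)) /\
  Yc n ^ 2 <= zser f * zser (fun m => f m * g (n - m) ^ 2).
Proof.
  set (x := fun m => sqrt (f m)). set (y := fun m => sqrt (f m) * g (n - m)).
  assert (Ex : forall m, x m ^ 2 = f m) by (intros; unfold x; rewrite pow2_sqrt; auto).
  assert (Ey : forall m, y m ^ 2 = f m * g (n - m) ^ 2) by (intros; unfold y; rewrite Rpow_mult_distr, pow2_sqrt; auto).
  assert (Exy : forall m, Rabs (x m) * Rabs (y m) = f m * g (n - m)).
  { intros m; unfold x, y. rewrite !Rabs_pos_eq. rewrite <- Rmult_assoc, sqrt_sqrt; auto.
    apply Rmult_le_pos; auto; apply sqrt_pos. apply sqrt_pos. }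
  destruct (zcs x y) as [H1 H2].
  - apply zok_ext with f; [intros m; rewrite Ex; auto| auto].
  - apply zok_ext with (fun m => f m * g (n - m) ^ 2); [intros m; rewrite Ey; auto| apply Y_aux_ok].
  - assert (Hok : zok (fun m => f m * g (n - m))) by (apply zok_ext with (fun m => Rabs (x m) * Rabs (y m)); auto).
    split; auto.
    unfold Yc. rewrite (zser_ext _ (fun m => Rabs (x m) * Rabs (y m))) by (intros; rewrite Exy; auto).
    rewrite (zser_ext (fun m => x m ^ 2) f) in H2 by auto.
    rewrite (zser_ext (fun m => y m ^ 2) (fun m => f m * g (n - m) ^ 2)) in H2 by auto.
    assert (0 <= zser (fun m => Rabs (x m) * Rabs (y m))).
    { apply zser_nonneg; auto. intros; apply Rmult_le_pos; apply Rabs_pos. }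
    apply Rle_trans with ((sqrt (zser f) * sqrt (zser (fun m => f m * g (n - m) ^ 2))) ^ 2).
    apply pow_incr; lra.
    rewrite Rpow_mult_distr, !pow2_sqrt. lra.
    apply zser_nonneg; [intros; apply Rmult_le_pos; auto; apply pow2_ge_0| apply Y_aux_ok].
    apply zser_nonneg; auto.
Qed.

Lemma Yc_nn n : 0 <= Yc n.
Proof. apply zser_nonneg. intros; apply Rmult_le_pos; auto. apply (Y1 n). Qed.

Lemma Y2 : zok (fun n => Yc n ^ 2) /\ zser (fun n => Yc n ^ 2) <= zser f ^ 2 * zser (fun x => g x ^ 2).
Proof.
  apply nn_ok. intros; apply pow2_ge_0.
  intros l Hl.
  assert (Hf0 : 0 <= zser f) by (apply zser_nonneg; auto).
  apply Rle_trans with (zser f * lsum (fun n => zser (fun m => f m * g (n - m) ^ 2)) l).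
  { rewrite <- lsum_scal. apply lsum_le. intros n. apply (Y1 n). }
  replace (zser f ^ 2 * zser (fun x => g x ^ 2)) with (zser f * (zser (fun x => g x ^ 2) * zser f)) by ring.
  apply Rmult_le_compat_l; auto.
  destruct (zser_lsum (fun n m => f m * g (n - m) ^ 2) l (fun n => Y_aux_ok n)) as [Hok HE].
  rewrite <- HE.
  rewrite (zser_ext _ (fun m => f m * lsum (fun n => g (n - m) ^ 2) l)).
  2: { intros m. rewrite <- lsum_scal. auto. }
  rewrite <- zser_scal.
  apply zser_le.
  - apply zok_ext with (fun m => lsum (fun n => f m * g (n - m) ^ 2) l); auto.
    intros m; rewrite <- lsum_scal; auto.
  - apply zok_scal; auto.
  - intros m. rewrite (Rmult_comm (zser _)). apply Rmult_le_compat_l; auto.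
    rewrite <- (lsum_map (fun x => g x ^ 2) (fun n => (n - m)%Z)).
    apply nn_bound; auto. intros; apply pow2_ge_0.
    apply FinFun.Injective_map_NoDup; auto. intros a b E; lia.
Qed.

End Young.

Section Conv.
Variable s : R.
Hypothesis hs : 1/2 < s.

Lemma cok_conv_term u v n : in_Hs s u -> in_Hs s v -> cok (fun m => (u m * v (n - m)%Z)%C).
Proof.
  intros Hu Hv. apply cok_dom with (fun m => hs_norm s v * Cmod (u m)).
  - intros m. rewrite Cmod_mult. pose proof (Hs_pt s hs v (n - m)%Z Hv). pose proof (Cmod_nonneg (u m)). nra.
  - apply zok_scal. apply (Hs_l1 s hs u Hu).
Qed.

Definition Cc := 2 * Kw s * Kl1 s.

Lemma Hs_conv u v : in_Hs s u -> in_Hs s v ->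
  in_Hs s (conv u v) /\ hs_norm s (conv u v) <= Cc * hs_norm s u * hs_norm s v.
Proof.
  intros Hu Hv.
  set (a := fun m => Cmod (u m)). set (b := fun m => Cmod (v m)).
  set (A := fun m => sqrt (weight s m) * a m). set (B := fun m => sqrt (weight s m) * b m).
  assert (a_nn : forall m, 0 <= a m) by (intros; apply Cmod_nonneg).
  assert (b_nn : forall m, 0 <= b m) by (intros; apply Cmod_nonneg).
  assert (A_nn : forall m, 0 <= A m) by (intros; apply Rmult_le_pos; auto; apply sqrt_pos).
  assert (B_nn : forall m, 0 <= B m) by (intros; apply Rmult_le_pos; auto; apply sqrt_pos).
  destruct (Hs_l1 s hs u Hu) as [a_ok a_le]. destruct (Hs_l1 s hs v Hv) as [b_ok b_le].
  assert (EA : forall m, A m ^ 2 = Wv s u m).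
  { intros; unfold A, a, Wv. rewrite Rpow_mult_distr, pow2_sqrt; auto. left; apply weight_pos; auto. }
  assert (EB : forall m, B m ^ 2 = Wv s v m).
  { intros; unfold B, b, Wv. rewrite Rpow_mult_distr, pow2_sqrt; auto. left; apply weight_pos; auto. }
  assert (A2_ok : zok (fun m => A m ^ 2)) by (apply zok_ext with (Wv s u); auto).
  assert (B2_ok : zok (fun m => B m ^ 2)) by (apply zok_ext with (Wv s v); auto).
  set (P1 := Yc b A). set (P2 := Yc a B).
  assert (Hpt : forall n, Wv s (conv u v) n <= 2 * Kw s ^ 2 * (P1 n ^ 2 + P2 n ^ 2)).
  { intros n.
    destruct (Y1 b A b_nn A_nn b_ok A2_ok n) as [H1ok _].
    destruct (Y1 a B a_nn B_nn a_ok B2_ok n) as [H2ok _].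
    destruct (nn_reindex_eq (fun m => b m * A (n - m)%Z) (fun m => (n - m)%Z) (fun m => (n - m)%Z)
                (fun m => Rmult_le_pos _ _ (b_nn m) (A_nn _)) H1ok) as [H3ok H3]; try (intros; lia).
    cbv beta in H3ok, H3.
    assert (E1 : P1 n = zser (fun m => A m * b (n - m)%Z)).
    { unfold P1, Yc. rewrite <- H3. apply zser_ext. intros m. rewrite Rmult_comm. f_equal. f_equal. lia. }
    assert (H3ok' : zok (fun m => A m * b (n - m)%Z)).
    { apply zok_ext with (fun m => b (n - m)%Z * A (n - (n - m))%Z); auto. intros m. rewrite Rmult_comm. f_equal. f_equal. lia. }
    assert (Hc : Cmod (conv u v n) <= zser (fun m => a m * b (n - m)%Z)).
    { unfold conv. eapply Rle_trans. apply Cmod_sumZ. apply cok_conv_term; auto.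
      right. apply zser_ext. intros m. unfold a, b. apply Cmod_mult. }
    assert (Hab_ok : zok (fun m => a m * b (n - m)%Z)).
    { pose proof (cok_conv_term u v n Hu Hv) as Hc'. unfold cok in Hc'.
      apply zok_ext with (fun m => Cmod (u m * v (n - m)%Z)%C); auto. intros m; apply Cmod_mult. }
    assert (Hsq : sqrt (weight s n) * Cmod (conv u v n) <= Kw s * (P1 n + P2 n)).
    { apply Rle_trans with (sqrt (weight s n) * zser (fun m => a m * b (n - m)%Z)).
      apply Rmult_le_compat_l; auto. apply sqrt_pos.
      rewrite <- zser_scal. rewrite E1. unfold P2, Yc.
      rewrite <- zser_plus, <- zser_scal; auto.
      apply zser_le. apply zok_scal; auto.
      apply zok_scal; apply zok_plus; auto.
      intros m. pose proof (sqrt_weight_split s hs n m).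
      unfold A, B. pose proof (a_nn m). pose proof (b_nn (n - m)%Z).
      assert (0 <= a m * b (n - m)%Z) by (apply Rmult_le_pos; auto).
      pose proof (Rmult_le_compat_r _ _ _ H2 H).
      nra. }
    unfold Wv. pose proof (weight_pos s hs n). pose proof (Kw_pos s).
    assert (Wv s (conv u v) n = (sqrt (weight s n) * Cmod (conv u v n)) ^ 2).
    { unfold Wv. rewrite Rpow_mult_distr, pow2_sqrt; lra. }
    unfold Wv in H1. rewrite H1.
    assert (0 <= sqrt (weight s n) * Cmod (conv u v n)) by (apply Rmult_le_pos; [apply sqrt_pos| apply Cmod_nonneg]).
    apply Rle_trans with ((Kw s * (P1 n + P2 n)) ^ 2). apply pow_incr; lra.
    pose proof (pow2_ge_0 (P1 n - P2 n)). rewrite Rpow_mult_distr. nra. }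
  destruct (Y2 b A b_nn A_nn b_ok A2_ok) as [Y1ok Y1le].
  destruct (Y2 a B a_nn B_nn a_ok B2_ok) as [Y2ok Y2le].
  fold P1 in Y1ok, Y1le. fold P2 in Y2ok, Y2le.
  rewrite (zser_ext (fun m => A m ^ 2) (Wv s u)) in Y1le by auto.
  rewrite (zser_ext (fun m => B m ^ 2) (Wv s v)) in Y2le by auto.
  rewrite <- hsn_sq in Y1le, Y2le; auto.
  pose proof (hsn_nonneg s u). pose proof (hsn_nonneg s v). pose proof (Kl1_nonneg s).
  pose proof (Kw_pos s).
  change (zser (fun n => Cmod (u n))) with (zser a) in a_le.
  change (zser (fun n => Cmod (v n))) with (zser b) in b_le.
  assert (0 <= zser a) by (apply zser_nonneg; auto).
  assert (0 <= zser b) by (apply zser_nonneg; auto).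
  assert (zser a ^ 2 <= (Kl1 s * hs_norm s u) ^ 2) by (apply pow_incr; lra).
  assert (zser b ^ 2 <= (Kl1 s * hs_norm s v) ^ 2) by (apply pow_incr; lra).
  set (Bd := (Cc * hs_norm s u * hs_norm s v) ^ 2).
  assert (HB : forall l, NoDup l -> lsum (Wv s (conv u v)) l <= Bd).
  { intros l Hl. eapply Rle_trans. apply lsum_le. apply Hpt.
    rewrite lsum_scal, lsum_plus.
    pose proof (nn_bound _ l (fun n => pow2_ge_0 (P1 n)) Y1ok Hl).
    pose proof (nn_bound _ l (fun n => pow2_ge_0 (P2 n)) Y2ok Hl).
    unfold Bd, Cc.
    assert (lsum (fun n => P1 n ^ 2) l + lsum (fun n => P2 n ^ 2) l <= 2 * (Kl1 s ^ 2 * hs_norm s u ^ 2 * hs_norm s v ^ 2)).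
    { rewrite !Rpow_mult_distr in *.
      assert (zser b ^ 2 * hs_norm s u ^ 2 <= Kl1 s ^ 2 * hs_norm s v ^ 2 * hs_norm s u ^ 2).
      { apply Rmult_le_compat_r; auto. apply pow2_ge_0. }
      assert (zser a ^ 2 * hs_norm s v ^ 2 <= Kl1 s ^ 2 * hs_norm s u ^ 2 * hs_norm s v ^ 2).
      { apply Rmult_le_compat_r; auto. apply pow2_ge_0. }
      lra. }
    assert (0 <= Kw s ^ 2) by apply pow2_ge_0.
    replace ((2 * Kw s * Kl1 s * hs_norm s u * hs_norm s v) ^ 2) with (2 * Kw s ^ 2 * (2 * (Kl1 s ^ 2 * hs_norm s u ^ 2 * hs_norm s v ^ 2))) by ring.
    apply Rmult_le_compat_l. lra. lra. }
  destruct (nn_ok _ _ (Wv_nonneg s hs (conv u v)) HB) as [Hok Hle].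
  split; auto. rewrite hs_norm_eq. unfold Bd in Hle.
  assert (0 <= Cc * hs_norm s u * hs_norm s v).
  { unfold Cc. repeat apply Rmult_le_pos; lra. }
  rewrite <- (sqrt_pow2 (Cc * hs_norm s u * hs_norm s v)); auto. apply sqrt_le_1_alt; auto.
Qed.

End Conv.

Definition lc (x : R) (u : seqZ) (y : R) (v : seqZ) : seqZ := sadd (sscal x u) (sscal y v).

Lemma H1_lin tau x u y v : H1 tau (lc x u y v) = lc x (H1 tau u) y (H1 tau v).
Proof.
  apply functional_extensionality; intros n. unfold lc, H1, sadd, sscal.
  apply injective_projections; simpl; ring.
Qed.

Lemma sconj_lin x u y v : sconj (lc x u y v) = lc x (sconj u) y (sconj v).
Proof.
  apply functional_extensionality; intros n. unfold lc, sconj, sadd, sscal.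
  apply injective_projections; simpl; ring.
Qed.

Section G.
Variable s : R.
Hypothesis hs : 1/2 < s.

Lemma Hs_lc x u y v : in_Hs s u -> in_Hs s v -> in_Hs s (lc x u y v).
Proof.
  intros Hu Hv. unfold lc. apply Hs_sadd; auto; apply Hs_sscal; auto.
Qed.

Lemma conv_lin_l x u1 y u2 v : in_Hs s u1 -> in_Hs s u2 -> in_Hs s v ->
  conv (lc x u1 y u2) v = lc x (conv u1 v) y (conv u2 v).
Proof.
  intros H1 H2 Hv. apply functional_extensionality; intros n. unfold conv, lc, sadd, sscal.
  rewrite (sumZ_ext _ (fun m => (RtoC x * (u1 m * v (n - m)%Z) + RtoC y * (u2 m * v (n - m)%Z))%C)).
  2: { intros m. apply injective_projections; simpl; ring. }
  rewrite sumZ_plus, !sumZ_scal; auto.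
  all: try apply cok_scal; apply (cok_conv_term s hs); auto.
Qed.

Lemma conv_lin_r x v1 y v2 u : in_Hs s v1 -> in_Hs s v2 -> in_Hs s u ->
  conv u (lc x v1 y v2) = lc x (conv u v1) y (conv u v2).
Proof.
  intros H1 H2 Hu. apply functional_extensionality; intros n. unfold conv, lc, sadd, sscal.
  rewrite (sumZ_ext _ (fun m => (RtoC x * (u m * v1 (n - m)%Z) + RtoC y * (u m * v2 (n - m)%Z))%C)).
  2: { intros m. apply injective_projections; simpl; ring. }
  rewrite sumZ_plus, !sumZ_scal; auto.
  all: try apply cok_scal; apply (cok_conv_term s hs); auto.
Qed.

Definition Tt (tau : R) (a b c : seqZ) : seqZ :=
  H1 (- tau) (conv (conv (H1 tau a) (H1 tau b)) (sconj (H1 tau c))).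

Lemma Fnl_Tt tau w : Fnl tau w = Tt tau w w w.
Proof. reflexivity. Qed.

Definition C0 := Cc s * Cc s.

Lemma C0_nonneg : 0 <= C0.
Proof. unfold C0, Cc. pose proof (Kw_pos s). pose proof (Kl1_nonneg s). pose proof (Rmult_le_pos (2 * Kw s) (Kl1 s)). nra. Qed.

Lemma Hs_Tt tau a b c : in_Hs s a -> in_Hs s b -> in_Hs s c ->
  in_Hs s (Tt tau a b c) /\ hs_norm s (Tt tau a b c) <= C0 * hs_norm s a * hs_norm s b * hs_norm s c.
Proof.
  intros Ha Hb Hc.
  destruct (Hs_H1 s tau a Ha) as [Ha1 Ea]. destruct (Hs_H1 s tau b Hb) as [Hb1 Eb].
  destruct (Hs_H1 s tau c Hc) as [Hc1 Ec].
  destruct (Hs_sconj s hs _ Hc1) as [Hc2 Ec2].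
  destruct (Hs_conv s hs _ _ Ha1 Hb1) as [Hab Nab].
  destruct (Hs_conv s hs _ _ Hab Hc2) as [Habc Nabc].
  destruct (Hs_H1 s (- tau) _ Habc) as [Hr Er].
  unfold Tt. split; auto. rewrite Er.
  eapply Rle_trans; [exact Nabc|]. rewrite Ec2, Ec.
  pose proof (hsn_nonneg s c). pose proof (hsn_nonneg s a). pose proof (hsn_nonneg s b).
  assert (0 <= Cc s) by (unfold Cc; pose proof (Kw_pos s); pose proof (Kl1_nonneg s); pose proof (Rmult_le_pos (2 * Kw s) (Kl1 s)); nra).
  rewrite Ea, Eb in Nab. unfold C0.
  apply Rmult_le_compat_r; auto. 
  replace (Cc s * Cc s * hs_norm s a * hs_norm s b) with (Cc s * (Cc s * hs_norm s a * hs_norm s b)) by ring.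
  apply Rmult_le_compat_l; auto.
Qed.

Lemma Tt_lin1 tau x u y v b c : in_Hs s u -> in_Hs s v -> in_Hs s b -> in_Hs s c ->
  Tt tau (lc x u y v) b c = lc x (Tt tau u b c) y (Tt tau v b c).
Proof.
  intros Hu Hv Hb Hc. unfold Tt.
  pose proof (proj1 (Hs_H1 s tau _ Hu)). pose proof (proj1 (Hs_H1 s tau _ Hv)).
  pose proof (proj1 (Hs_H1 s tau _ Hb)). pose proof (proj1 (Hs_sconj s hs _ (proj1 (Hs_H1 s tau _ Hc)))).
  rewrite H1_lin, conv_lin_l, conv_lin_l, H1_lin; auto; apply Hs_conv; auto.
Qed.

Lemma Tt_lin2 tau x u y v a c : in_Hs s u -> in_Hs s v -> in_Hs s a -> in_Hs s c ->
  Tt tau a (lc x u y v) c = lc x (Tt tau a u c) y (Tt tau a v c).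
Proof.
  intros Hu Hv Ha Hc. unfold Tt.
  pose proof (proj1 (Hs_H1 s tau _ Hu)). pose proof (proj1 (Hs_H1 s tau _ Hv)).
  pose proof (proj1 (Hs_H1 s tau _ Ha)). pose proof (proj1 (Hs_sconj s hs _ (proj1 (Hs_H1 s tau _ Hc)))).
  rewrite H1_lin, conv_lin_r, conv_lin_l, H1_lin; auto; apply Hs_conv; auto.
Qed.

Lemma Tt_lin3 tau x u y v a b : in_Hs s u -> in_Hs s v -> in_Hs s a -> in_Hs s b ->
  Tt tau a b (lc x u y v) = lc x (Tt tau a b u) y (Tt tau a b v).
Proof.
  intros Hu Hv Ha Hb. unfold Tt.
  pose proof (proj1 (Hs_sconj s hs _ (proj1 (Hs_H1 s tau _ Hu)))).
  pose proof (proj1 (Hs_sconj s hs _ (proj1 (Hs_H1 s tau _ Hv)))).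
  pose proof (proj1 (Hs_H1 s tau _ Ha)). pose proof (proj1 (Hs_H1 s tau _ Hb)).
  rewrite H1_lin, sconj_lin, conv_lin_r, H1_lin; auto; apply Hs_conv; auto.
Qed.

Lemma sadd_lc u v : sadd u v = lc 1 u 1 v.
Proof.
  apply functional_extensionality; intros n. unfold lc, sadd, sscal.
  apply injective_projections; simpl; ring.
Qed.

Lemma lc_sadd u v : lc 1 u 1 v = sadd u v.
Proof. symmetry; apply sadd_lc. Qed.

Lemma Tt_add1 tau u v b c : in_Hs s u -> in_Hs s v -> in_Hs s b -> in_Hs s c ->
  Tt tau (sadd u v) b c = sadd (Tt tau u b c) (Tt tau v b c).
Proof. intros. rewrite sadd_lc, Tt_lin1, lc_sadd; auto. Qed.
Lemma Tt_add2 tau u v a c : in_Hs s u -> in_Hs s v -> in_Hs s a -> in_Hs s c ->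
  Tt tau a (sadd u v) c = sadd (Tt tau a u c) (Tt tau a v c).
Proof. intros. rewrite sadd_lc, Tt_lin2, lc_sadd; auto. Qed.
Lemma Tt_add3 tau u v a b : in_Hs s u -> in_Hs s v -> in_Hs s a -> in_Hs s b ->
  Tt tau a b (sadd u v) = sadd (Tt tau a b u) (Tt tau a b v).
Proof. intros. rewrite sadd_lc, Tt_lin3, lc_sadd; auto. Qed.

End G.

Arguments Tt : simpl never.

Section H.
Variable s : R.
Hypothesis hs : 1/2 < s.
Variable tau : R.

Notation T := (Tt tau).

Lemma m4 a b c d : 0 <= a -> 0 <= b -> 0 <= c -> 0 <= d -> 0 <= a * b * c * d.
Proof. intros. repeat apply Rmult_le_pos; auto. Qed.

Definition sum3 (x y z : seqZ) := sadd (sadd x y) z.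
Definition sum4 (x y z t : seqZ) := sadd (sadd (sadd x y) z) t.
Definition sum6 (x1 x2 x3 x4 x5 x6 : seqZ) := sadd (sadd (sadd (sadd (sadd x1 x2) x3) x4) x5) x6.

Lemma Hs_sum3 x y z : in_Hs s x -> in_Hs s y -> in_Hs s z ->
  in_Hs s (sum3 x y z) /\ hs_norm s (sum3 x y z) <= 4 * (hs_norm s x + hs_norm s y + hs_norm s z).
Proof.
  intros. unfold sum3. destruct (Hs_sadd s hs x y) as [H2 H3]; auto.
  destruct (Hs_sadd s hs (sadd x y) z) as [H4 H5]; auto. split; auto.
  pose proof (hsn_nonneg s x). pose proof (hsn_nonneg s y). pose proof (hsn_nonneg s z). lra.
Qed.

Lemma Hs_sum4 x y z t : in_Hs s x -> in_Hs s y -> in_Hs s z -> in_Hs s t ->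
  in_Hs s (sum4 x y z t) /\ hs_norm s (sum4 x y z t) <= 8 * (hs_norm s x + hs_norm s y + hs_norm s z + hs_norm s t).
Proof.
  intros. unfold sum4. destruct (Hs_sum3 x y z) as [H4 H5]; auto. unfold sum3 in *.
  destruct (Hs_sadd s hs (sadd (sadd x y) z) t) as [H6 H7]; auto. split; auto.
  pose proof (hsn_nonneg s x). pose proof (hsn_nonneg s y). pose proof (hsn_nonneg s z). pose proof (hsn_nonneg s t). lra.
Qed.

Lemma Hs_sum6 x1 x2 x3 x4 x5 x6 : in_Hs s x1 -> in_Hs s x2 -> in_Hs s x3 -> in_Hs s x4 -> in_Hs s x5 -> in_Hs s x6 ->
  in_Hs s (sum6 x1 x2 x3 x4 x5 x6) /\ hs_norm s (sum6 x1 x2 x3 x4 x5 x6) <=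
   32 * (hs_norm s x1 + hs_norm s x2 + hs_norm s x3 + hs_norm s x4 + hs_norm s x5 + hs_norm s x6).
Proof.
  intros. unfold sum6. destruct (Hs_sum4 x1 x2 x3 x4) as [H7 H8]; auto. unfold sum4 in *.
  destruct (Hs_sadd s hs (sadd (sadd (sadd x1 x2) x3) x4) x5) as [H9 H10]; auto.
  destruct (Hs_sadd s hs (sadd (sadd (sadd (sadd x1 x2) x3) x4) x5) x6) as [H11 H12]; auto.
  split; auto.
  pose proof (hsn_nonneg s x1). pose proof (hsn_nonneg s x2). pose proof (hsn_nonneg s x3).
  pose proof (hsn_nonneg s x4). pose proof (hsn_nonneg s x5). pose proof (hsn_nonneg s x6). lra.
Qed.

Definition DD (k : nat) (w : seqZ) (hh : nat -> seqZ) : seqZ :=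
  match k with
  | O => T w w w
  | 1%nat => sum3 (T (hh 0%nat) w w) (T w (hh 0%nat) w) (T w w (hh 0%nat))
  | 2%nat => let h0 := hh 0%nat in let h1 := hh 1%nat in
      sum6 (T h0 h1 w) (T h1 h0 w) (T h0 w h1) (T h1 w h0) (T w h0 h1) (T w h1 h0)
  | 3%nat => let h0 := hh 0%nat in let h1 := hh 1%nat in let h2 := hh 2%nat in
      sum6 (T h0 h1 h2) (T h0 h2 h1) (T h1 h0 h2) (T h1 h2 h0) (T h2 h0 h1) (T h2 h1 h0)
  | _ => szero
  end.

Lemma HsT a b c : in_Hs s a -> in_Hs s b -> in_Hs s c -> in_Hs s (T a b c).
Proof. intros; apply (Hs_Tt s hs); auto. Qed.

Lemma nT a b c : in_Hs s a -> in_Hs s b -> in_Hs s c -> hs_norm s (T a b c) <= C0 s * hs_norm s a * hs_norm s b * hs_norm s c.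
Proof. intros; apply (Hs_Tt s hs); auto. Qed.

Hint Resolve HsT : core.

Lemma DD_Hs k w hh : in_Hs s w -> (forall i, (i < k)%nat -> in_Hs s (hh i)) -> in_Hs s (DD k w hh).
Proof.
  intros Hw H. destruct k as [|[|[|[|k]]]]; simpl.
  - auto.
  - pose proof (H 0%nat ltac:(lia)). apply Hs_sum3; auto.
  - pose proof (H 0%nat ltac:(lia)). pose proof (H 1%nat ltac:(lia)). apply Hs_sum6; auto.
  - pose proof (H 0%nat ltac:(lia)). pose proof (H 1%nat ltac:(lia)). pose proof (H 2%nat ltac:(lia)). apply Hs_sum6; auto.
  - apply (Hs_zero s).
Qed.


Ltac pw := apply functional_extensionality; intros ?n;
  unfold sum3, sum4, sum6, lc, sadd, ssub, sscal, szero; ring.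

Lemma DD_lin k w : in_Hs s w -> forall hh i (a b : R) u v, (i < k)%nat ->
     (forall j, (j < k)%nat -> in_Hs s (hh j)) -> in_Hs s u -> in_Hs s v ->
     DD k w (upd hh i (sadd (sscal a u) (sscal b v)))
     = sadd (sscal a (DD k w (upd hh i u))) (sscal b (DD k w (upd hh i v))).
Proof.
  intros Hw hh i a b u v Hi Hh Hu Hv.
  change (sadd (sscal a u) (sscal b v)) with (lc a u b v).
  destruct k as [|[|[|[|k]]]]; try lia.
  - assert (i = 0%nat) by lia. subst. cbn [DD upd Nat.eqb].
    rewrite ?(Tt_lin1 s hs tau), ?(Tt_lin2 s hs tau), ?(Tt_lin3 s hs tau) by assumption. pw.
  - pose proof (Hh 0%nat ltac:(lia)). pose proof (Hh 1%nat ltac:(lia)).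
    destruct i as [|[|i]]; try lia; cbn [DD upd Nat.eqb];
    rewrite ?(Tt_lin1 s hs tau), ?(Tt_lin2 s hs tau), ?(Tt_lin3 s hs tau) by assumption; pw.
  - pose proof (Hh 0%nat ltac:(lia)). pose proof (Hh 1%nat ltac:(lia)). pose proof (Hh 2%nat ltac:(lia)).
    destruct i as [|[|[|i]]]; try lia; cbn [DD upd Nat.eqb];
    rewrite ?(Tt_lin1 s hs tau), ?(Tt_lin2 s hs tau), ?(Tt_lin3 s hs tau) by assumption; pw.
  - cbn [DD]. pw.
Qed.

Lemma DD_ext k w hh hh' : (forall i, (i < k)%nat -> hh i = hh' i) -> DD k w hh = DD k w hh'.
Proof.
  intros H. destruct k as [|[|[|[|k]]]]; cbn [DD]; auto.
  - rewrite (H 0%nat); auto.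
  - rewrite (H 0%nat), (H 1%nat); auto.
  - rewrite (H 0%nat), (H 1%nat), (H 2%nat); auto.
Qed.

Lemma DD_bound k w : in_Hs s w -> exists M, forall hh, (forall i, (i < k)%nat -> in_Hs s (hh i)) ->
     hs_norm s (DD k w hh) <= M * prod_norms s k hh.
Proof.
  intros Hw. pose proof (C0_nonneg s) as HC. set (nw := hs_norm s w).
  assert (Hnw : 0 <= nw) by apply hsn_nonneg.
  destruct k as [|[|[|[|k]]]].
  - exists (C0 s * nw ^ 3). intros hh _. unfold prod_norms; simpl. cbn [DD].
    pose proof (nT w w w Hw Hw Hw). fold nw in H. lra.
  - exists (12 * C0 s * nw ^ 2). intros hh Hh. unfold prod_norms; simpl. cbn [DD].
    pose proof (Hh 0%nat ltac:(lia)) as H0. set (n0 := hs_norm s (hh 0%nat)).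
    assert (0 <= n0) by apply hsn_nonneg.
    destruct (Hs_sum3 (T (hh 0%nat) w w) (T w (hh 0%nat) w) (T w w (hh 0%nat))) as [_ Hb]; auto.
    pose proof (nT (hh 0%nat) w w H0 Hw Hw). pose proof (nT w (hh 0%nat) w Hw H0 Hw). pose proof (nT w w (hh 0%nat) Hw Hw H0).
    fold nw n0 in H1, H2, H3. 
    eapply Rle_trans. apply Hb. nra.
  - exists (192 * C0 s * nw). intros hh Hh. unfold prod_norms; simpl. cbn [DD].
    pose proof (Hh 0%nat ltac:(lia)) as H0. pose proof (Hh 1%nat ltac:(lia)) as H1.
    set (n0 := hs_norm s (hh 0%nat)). set (n1 := hs_norm s (hh 1%nat)).
    assert (0 <= n0) by apply hsn_nonneg. assert (0 <= n1) by apply hsn_nonneg.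
    edestruct Hs_sum6 as [_ Hb]; [| | | | | | eapply Rle_trans; [apply Hb|]]; auto.
    pose proof (nT (hh 0%nat) (hh 1%nat) w H0 H1 Hw) as P1. pose proof (nT (hh 1%nat) (hh 0%nat) w H1 H0 Hw) as P2.
    pose proof (nT (hh 0%nat) w (hh 1%nat) H0 Hw H1) as P3. pose proof (nT (hh 1%nat) w (hh 0%nat) H1 Hw H0) as P4.
    pose proof (nT w (hh 0%nat) (hh 1%nat) Hw H0 H1) as P5. pose proof (nT w (hh 1%nat) (hh 0%nat) Hw H1 H0) as P6.
    fold nw n0 n1 in P1, P2, P3, P4, P5, P6.
    assert (0 <= C0 s * n0 * n1 * nw) by (apply m4; auto).
    nra.
  - exists (192 * C0 s). intros hh Hh. unfold prod_norms; simpl. cbn [DD].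
    pose proof (Hh 0%nat ltac:(lia)) as H0. pose proof (Hh 1%nat ltac:(lia)) as H1. pose proof (Hh 2%nat ltac:(lia)) as H2.
    set (n0 := hs_norm s (hh 0%nat)). set (n1 := hs_norm s (hh 1%nat)). set (n2 := hs_norm s (hh 2%nat)).
    assert (0 <= n0) by apply hsn_nonneg. assert (0 <= n1) by apply hsn_nonneg. assert (0 <= n2) by apply hsn_nonneg.
    edestruct Hs_sum6 as [_ Hb]; [| | | | | | eapply Rle_trans; [apply Hb|]]; auto.
    pose proof (nT _ _ _ H0 H1 H2) as P1. pose proof (nT _ _ _ H0 H2 H1) as P2. pose proof (nT _ _ _ H1 H0 H2) as P3.
    pose proof (nT _ _ _ H1 H2 H0) as P4. pose proof (nT _ _ _ H2 H0 H1) as P5. pose proof (nT _ _ _ H2 H1 H0) as P6.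
    fold n0 n1 n2 in P1, P2, P3, P4, P5, P6.
    assert (0 <= C0 s * n0 * n1 * n2) by (apply m4; auto).
    nra.
  - exists 0. intros hh _. cbn [DD]. rewrite (proj2 (Hs_zero s)). unfold prod_norms.
    assert (0 <= fold_right Rmult 1 (map (fun i => hs_norm s (hh i)) (seq 0 (S (S (S (S k))))))).
    { generalize (seq 0 (S (S (S (S k))))). intros l; induction l; simpl; [lra|].
      apply Rmult_le_pos; auto; apply hsn_nonneg. }
    lra.
Qed.

End H.

Arguments Tt : simpl never.

Section I.
Variable s : R.
Hypothesis hs : 1/2 < s.
Variable tau : R.

Notation T := (Tt tau).

Ltac pw := apply functional_extensionality; intros ?n;
  unfold sum3, sum4, sum6, lc, sadd, ssub, sscal, szero; ring.

Ltac expand := rewrite ?(Tt_add1 s hs tau), ?(Tt_add2 s hs tau), ?(Tt_add3 s hs tau) by assumption.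

Lemma nT' a b c : in_Hs s a -> in_Hs s b -> in_Hs s c -> hs_norm s (T a b c) <= C0 s * hs_norm s a * hs_norm s b * hs_norm s c.
Proof. intros; apply (Hs_Tt s hs); auto. Qed.

Lemma HsT' a b c : in_Hs s a -> in_Hs s b -> in_Hs s c -> in_Hs s (T a b c).
Proof. intros; apply (Hs_Tt s hs); auto. Qed.
Hint Resolve HsT' : core.

Lemma DD_rem k w : in_Hs s w -> forall eps, 0 < eps -> exists delta, 0 < delta /\
       forall h, in_Hs s h -> hs_norm s h < delta ->
       forall hh, (forall i, (i < k)%nat -> in_Hs s (hh i) /\ hs_norm s (hh i) <= 1) ->
       hs_norm s (ssub (DD tau k (sadd w h) hh)
                       (sadd (DD tau k w hh) (DD tau (S k) w (shift_in h hh))))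
       <= eps * hs_norm s h.
Proof.
  intros Hw eps Heps. pose proof (C0_nonneg s) as HC.
  set (nw := hs_norm s w). assert (Hnw : 0 <= nw) by apply hsn_nonneg.
  destruct k as [|[|[|k]]].
  - set (K := 8 * C0 s * (3 * nw + 1)). assert (HK : 0 <= K) by (unfold K; nra).
    exists (Rmin 1 (eps / (K + 1))). split.
    { apply Rmin_pos. lra. apply Rdiv_lt_0_compat; lra. }
    intros h Hh Hsmall hh _.
    assert (Hwh : in_Hs s (sadd w h)) by (apply Hs_sadd; auto).
    cbn [DD shift_in].
    assert (E : ssub (T (sadd w h) (sadd w h) (sadd w h)) (sadd (T w w w) (sum3 (T h w w) (T w h w) (T w w h)))
              = sum4 (T h h w) (T h w h) (T w h h) (T h h h)).
    { expand. pw. }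
    rewrite E. set (nh := hs_norm s h). assert (Hnh : 0 <= nh) by apply hsn_nonneg.
    edestruct (Hs_sum4 s hs) as [_ Hb]; [| | | | eapply Rle_trans; [apply Hb|]]; auto.
    pose proof (nT' h h w Hh Hh Hw) as P1. pose proof (nT' h w h Hh Hw Hh) as P2.
    pose proof (nT' w h h Hw Hh Hh) as P3. pose proof (nT' h h h Hh Hh Hh) as P4.
    fold nh nw in P1, P2, P3, P4.
    assert (Hd1 : nh <= 1) by (pose proof (Rmin_l 1 (eps / (K + 1))); fold nh in Hsmall; lra).
    assert (Hd2 : nh <= eps / (K + 1)) by (pose proof (Rmin_r 1 (eps / (K + 1))); fold nh in Hsmall; lra).
    assert (Hd3 : nh * K <= eps).
    { apply Rle_trans with (eps / (K + 1) * K). apply Rmult_le_compat_r; auto.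
      unfold Rdiv. rewrite Rmult_assoc. rewrite <- (Rmult_1_r eps) at 2. apply Rmult_le_compat_l. lra.
      apply Rmult_le_reg_l with (K + 1). lra. field_simplify; lra. }
    assert (8 * (C0 s * nh * nh * nw + C0 s * nh * nw * nh + C0 s * nw * nh * nh + C0 s * nh * nh * nh) <= nh * (nh * K)).
    { unfold K. assert (0 <= C0 s * nh * nh) by (apply Rmult_le_pos; [apply Rmult_le_pos|]; auto).
      assert (C0 s * nh * nh * nh <= C0 s * nh * nh * 1) by (apply Rmult_le_compat_l; auto). nra. }
    assert (nh * (nh * K) <= eps * nh) by (rewrite Rmult_comm; apply Rmult_le_compat_r; auto).
    lra.
  - set (K := 12 * C0 s). exists (eps / (K + 1)). split. apply Rdiv_lt_0_compat; unfold K; lra.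
    intros h Hh Hsmall hh Hhh. destruct (Hhh 0%nat ltac:(lia)) as [H0 N0].
    assert (Hwh : in_Hs s (sadd w h)) by (apply Hs_sadd; auto).
    cbn [DD shift_in].
    assert (E : ssub (sum3 (T (hh 0%nat) (sadd w h) (sadd w h)) (T (sadd w h) (hh 0%nat) (sadd w h)) (T (sadd w h) (sadd w h) (hh 0%nat)))
               (sadd (sum3 (T (hh 0%nat) w w) (T w (hh 0%nat) w) (T w w (hh 0%nat)))
                 (sum6 (T h (hh 0%nat) w) (T (hh 0%nat) h w) (T h w (hh 0%nat)) (T (hh 0%nat) w h) (T w h (hh 0%nat)) (T w (hh 0%nat) h)))
            = sum3 (T (hh 0%nat) h h) (T h (hh 0%nat) h) (T h h (hh 0%nat))).
    { unfold sum3. expand. pw. }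
    rewrite E. set (nh := hs_norm s h). assert (Hnh : 0 <= nh) by apply hsn_nonneg.
    set (n0 := hs_norm s (hh 0%nat)) in *. assert (Hn0 : 0 <= n0) by apply hsn_nonneg.
    edestruct (Hs_sum3 s hs) as [_ Hb]; [| | | eapply Rle_trans; [apply Hb|]]; auto.
    pose proof (nT' _ _ _ H0 Hh Hh) as P1. pose proof (nT' _ _ _ Hh H0 Hh) as P2. pose proof (nT' _ _ _ Hh Hh H0) as P3.
    fold nh n0 in P1, P2, P3.
    assert (Hd2 : nh <= eps / (K + 1)) by (fold nh in Hsmall; lra).
    assert (Hd3 : nh * K <= eps).
    { assert (HK : 0 <= K) by (unfold K; lra).
      apply Rle_trans with (eps / (K + 1) * K). apply Rmult_le_compat_r; auto.
      apply Rmult_le_reg_l with (K + 1). lra. field_simplify; nra. }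
    assert (4 * (C0 s * n0 * nh * nh + C0 s * nh * n0 * nh + C0 s * nh * nh * n0) <= nh * (nh * K)).
    { unfold K. assert (0 <= C0 s * nh * nh) by (apply Rmult_le_pos; [apply Rmult_le_pos|]; auto).
      assert (C0 s * nh * nh * n0 <= C0 s * nh * nh * 1) by (apply Rmult_le_compat_l; auto). nra. }
    assert (nh * (nh * K) <= eps * nh) by (rewrite Rmult_comm; apply Rmult_le_compat_r; auto).
    lra.
  - exists 1. split. lra. intros h Hh _ hh Hhh.
    destruct (Hhh 0%nat ltac:(lia)) as [H0 _]. destruct (Hhh 1%nat ltac:(lia)) as [H1 _].
    assert (Hwh : in_Hs s (sadd w h)) by (apply Hs_sadd; auto).
    cbn [DD shift_in].
    match goal with |- hs_norm s ?X <= _ => assert (E : X = szero) end.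
    { unfold sum6. expand. pw. }
    rewrite E, (proj2 (Hs_zero s)). pose proof (hsn_nonneg s h). nra.
  - exists 1. split. lra. intros h Hh _ hh Hhh.
    match goal with |- hs_norm s ?X <= _ => assert (E : X = szero) end.
    { destruct k as [|k]; cbn [DD shift_in]; pw. }
    rewrite E, (proj2 (Hs_zero s)). pose proof (hsn_nonneg s h). nra.
Qed.

Lemma smooth_Fnl : smooth_Hs s (Fnl tau).
Proof.
  exists (fun k w hh => DD tau k w hh). split; [|split].
  - intros w hh _. reflexivity.
  - intros k w Hw. split; [|split; [|split]].
    + intros hh Hh. apply (DD_Hs s hs tau); auto.
    + intros hh hh' Hh. apply DD_ext; auto.
    + intros hh i a b u v Hi Hh Hu Hv. apply (DD_lin s hs tau); auto.
    + apply (DD_bound s hs tau); auto.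
  - intros k w Hw eps Heps. apply DD_rem; auto.
Qed.

End I.

Lemma tail_bound (a b : nat -> R) N : (forall k, Rabs (a k) <= b k) -> ex_series b ->
  Rabs (Series a - sum_n a N) <= Series b - sum_n b N.
Proof.
  intros Hab Hb.
  assert (Ha : ex_series a) by (apply (ex_series_le a b); auto).
  rewrite (Series_incr_n a (S N)), (Series_incr_n b (S N)); auto; try lia.
  simpl pred. rewrite !sum_n_Reals.
  replace (sum_f_R0 a N + Series (fun k => a (S N + k)%nat) - sum_f_R0 a N) with (Series (fun k => a (S N + k)%nat)) by ring.
  replace (sum_f_R0 b N + Series (fun k => b (S N + k)%nat) - sum_f_R0 b N) with (Series (fun k => b (S N + k)%nat)) by ring.
  assert (Hb' : ex_series (fun k => b (S N + k)%nat)) by (apply ex_series_incr_n; auto).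
  assert (Ha' : ex_series (fun k => Rabs (a (S N + k)%nat))).
  { apply (@ex_series_le R_AbsRing R_CompleteNormedModule _ (fun k => b (S N + k)%nat)); auto. intros k. unfold norm; simpl. unfold abs; simpl.
    rewrite Rabs_Rabsolu. auto. }
  eapply Rle_trans. apply Series_Rabs; auto.
  apply Series_le; auto. intros; split; [apply Rabs_pos| auto].
Qed.

Lemma series_tail_small (b : nat -> R) : ex_series b -> forall eps : posreal,
  eventually (fun N => Rabs (sum_n b N - Series b) < eps).
Proof.
  intros Hb eps. apply Series_correct in Hb. unfold is_series in Hb.
  apply (Hb (fun x => Rabs (x - Series b) < eps)). exists eps. intros y Hy. exact Hy.
Qed.

Lemma is_RInt_sum_n (f : R -> nat -> R) (F : nat -> R) a b :
  (forall k, is_RInt (fun t => f t k) a b (F k)) ->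
  forall N, is_RInt (fun t => sum_n (f t) N) a b (sum_n F N).
Proof.
  intros H N. induction N.
  - rewrite sum_O. eapply is_RInt_ext; [|apply (H 0%nat)]. intros; rewrite sum_O; auto.
  - rewrite sum_Sn. eapply is_RInt_ext; [|apply (is_RInt_plus _ _ _ _ _ _ IHN (H (S N)))].
    intros; rewrite sum_Sn; auto.
Qed.

Lemma int_zser (T : R) (f : R -> Z -> R) (F : Z -> R) (M : Z -> R) :
  (forall k, is_RInt (fun t => f t k) 0 T (F k)) ->
  (forall t k, Rabs (f t k) <= M k) -> zok M -> zok F ->
  is_RInt (fun t => zser (f t)) 0 T (zser F).
Proof.
  intros HI Hb HM HF.
  assert (HIp : forall k, is_RInt (fun t => pr (f t) k) 0 T (pr F k)).
  { intros k. unfold pr. apply (is_RInt_plus (fun t => f t (Z.of_nat k)) (fun t => f t (- Z.of_nat k - 1)%Z)); auto. }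
  pose proof (is_RInt_sum_n (fun t k => pr (f t) k) (pr F) 0 T HIp) as HS.
  assert (Hpb : forall t k, Rabs (pr (f t) k) <= pr M k).
  { intros t k. unfold pr. eapply Rle_trans. apply Rabs_triang. pose proof (Hb t (Z.of_nat k)). pose proof (Hb t (- Z.of_nat k - 1)%Z). lra. }
  assert (Hunif : filterlim (fun N t => sum_n (pr (f t)) N) eventually
                    (@locally (fct_UniformSpace R R_UniformSpace) (fun t => zser (f t)))).
  { intros P [eps HP]. destruct (series_tail_small (pr M) HM eps) as [N0 HN0].
    exists N0. intros N HN. apply HP. intros t. specialize (HN0 N HN).
    change (Rabs (sum_n (pr (f t)) N - zser (f t)) < eps).
    rewrite Rabs_minus_sym. eapply Rle_lt_trans. apply tail_bound. apply Hpb. apply HM.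
    rewrite Rabs_minus_sym in HN0. unfold zser. 
    apply Rle_lt_trans with (Rabs (Series (pr M) - sum_n (pr M) N)). apply Rle_abs. auto. }
  destruct (filterlim_RInt (fun N t => sum_n (pr (f t)) N) 0 T eventually eventually_filter
             (fun t => zser (f t)) (fun N => sum_n (pr F) N) HS Hunif) as [If [HIf HIg]].
  assert (E : If = zser F).
  { apply Series_correct in HF. unfold is_series in HF.
    assert (H1 : is_lim_seq (fun N => sum_n (pr F) N) If) by exact HIf.
    assert (H2 : is_lim_seq (fun N => sum_n (pr F) N) (zser F)) by exact HF.
    apply is_lim_seq_unique in H1. apply is_lim_seq_unique in H2. rewrite H1 in H2. injection H2; auto. }
  rewrite <- E. exact HIg.
Qed.

Lemma int_sumZ (T : R) (g : R -> Z -> C) (J : Z -> C) (M : Z -> R) :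
  (forall k, is_RInt (fun t => Re (g t k)) 0 T (Re (J k))) ->
  (forall k, is_RInt (fun t => Im (g t k)) 0 T (Im (J k))) ->
  (forall t k, Cmod (g t k) <= M k) -> zok M -> cok J ->
  is_RInt (fun t => Re (sumZ (g t))) 0 T (Re (sumZ J)) /\
  is_RInt (fun t => Im (sumZ (g t))) 0 T (Im (sumZ J)).
Proof.
  intros HR HI Hb HM HJ. split.
  - apply (int_zser T (fun t k => Re (g t k)) (fun k => Re (J k)) M); auto.
    intros t k. eapply Rle_trans. apply re_le_Cmod. auto. apply cok_re; auto.
  - apply (int_zser T (fun t k => Im (g t k)) (fun k => Im (J k)) M); auto.
    intros t k. eapply Rle_trans. apply im_le_Cmod. auto. apply cok_im; auto.
Qed.

Lemma cos_periodZ x (z : Z) : cos (x + 2 * IZR z * PI) = cos x.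
Proof.
  destruct z as [|p|p].
  - simpl. f_equal. ring.
  - replace (IZR (Z.pos p)) with (INR (Pos.to_nat p)) by (rewrite INR_IZR_INZ, positive_nat_Z; auto).
    apply cos_period.
  - replace (IZR (Z.neg p)) with (- INR (Pos.to_nat p)) by (rewrite INR_IZR_INZ, <- Pos2Z.opp_pos, opp_IZR, positive_nat_Z; auto).
    rewrite <- (cos_period (x + 2 * - INR (Pos.to_nat p) * PI) (Pos.to_nat p)). f_equal. ring.
Qed.

Lemma sin_periodZ x (z : Z) : sin (x + 2 * IZR z * PI) = sin x.
Proof.
  destruct z as [|p|p].
  - simpl. f_equal. ring.
  - replace (IZR (Z.pos p)) with (INR (Pos.to_nat p)) by (rewrite INR_IZR_INZ, positive_nat_Z; auto).
    apply sin_period.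
  - replace (IZR (Z.neg p)) with (- INR (Pos.to_nat p)) by (rewrite INR_IZR_INZ, <- Pos2Z.opp_pos, opp_IZR, positive_nat_Z; auto).
    rewrite <- (sin_period (x + 2 * - INR (Pos.to_nat p) * PI) (Pos.to_nat p)). f_equal. ring.
Qed.

Lemma H1_period tau v : H1 (tau + 2 * PI) v = H1 tau v.
Proof.
  apply functional_extensionality; intros n. unfold H1. f_equal. f_equal.
  - replace (IZR (n ^ 3) * (tau + 2 * PI)) with (IZR (n ^ 3) * tau + 2 * IZR (n ^ 3) * PI) by ring.
    apply cos_periodZ.
  - replace (IZR (n ^ 3) * (tau + 2 * PI)) with (IZR (n ^ 3) * tau + 2 * IZR (n ^ 3) * PI) by ring.
    rewrite sin_periodZ; auto.
Qed.

Lemma H1_period' tau v : H1 (- (tau + 2 * PI)) v = H1 (- tau) v.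
Proof.
  apply functional_extensionality; intros n. unfold H1. f_equal. f_equal.
  - replace (IZR (n ^ 3) * - (tau + 2 * PI)) with (IZR (n ^ 3) * - tau + 2 * IZR (- (n ^ 3)) * PI) by (rewrite opp_IZR; ring).
    apply cos_periodZ.
  - replace (IZR (n ^ 3) * - (tau + 2 * PI)) with (IZR (n ^ 3) * - tau + 2 * IZR (- (n ^ 3)) * PI) by (rewrite opp_IZR; ring).
    rewrite sin_periodZ; auto.
Qed.

Lemma Fnl_period tau w : Fnl (tau + 2 * PI) w = Fnl tau w.
Proof. unfold Fnl. rewrite H1_period, H1_period'. reflexivity. Qed.

Lemma IZR_neq0 (z : Z) : z <> 0%Z -> IZR z <> 0.
Proof. intros H E. apply H. apply eq_IZR. auto. Qed.

Lemma int_cos (z : Z) : is_RInt (fun t => cos (IZR z * t)) 0 (2 * PI) (if Z.eqb z 0 then 2 * PI else 0).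
Proof.
  destruct (Z.eq_dec z 0) as [->|Hz]; [rewrite Z.eqb_refl | rewrite (proj2 (Z.eqb_neq z 0) Hz)].
  - replace (2 * PI) with (scal (2 * PI - 0) 1) at 2 by (unfold scal; simpl; unfold mult; simpl; ring).
    eapply is_RInt_ext; [|apply (is_RInt_const (V := R_NormedModule))]. intros; simpl. rewrite Rmult_0_l, cos_0. auto.
  - set (a := IZR z). assert (Ha : a <> 0) by (apply IZR_neq0; auto).
    replace 0 with (minus (sin (a * (2 * PI)) / a) (sin (a * 0) / a)) at 2.
    2: { unfold minus, plus, opp; simpl. rewrite Rmult_0_r, sin_0.
         replace (a * (2 * PI)) with (0 + 2 * IZR z * PI) by (unfold a; ring). rewrite sin_periodZ, sin_0. field; auto. }
    apply (is_RInt_derive (fun t => sin (a * t) / a)).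
    + intros x _. auto_derive; auto. field; auto.
    + intros x _. apply (ex_derive_continuous (V := R_NormedModule)). auto_derive; auto.
Qed.

Lemma int_sin (z : Z) : is_RInt (fun t => sin (IZR z * t)) 0 (2 * PI) 0.
Proof.
  destruct (Z.eq_dec z 0) as [->|Hz].
  - replace 0 with (scal (2 * PI - 0) 0) at 2 by (unfold scal; simpl; unfold mult; simpl; ring).
    eapply is_RInt_ext; [|apply (is_RInt_const (V := R_NormedModule))]. intros; simpl. rewrite Rmult_0_l, sin_0. auto.
  - set (a := IZR z). assert (Ha : a <> 0) by (apply IZR_neq0; auto).
    replace 0 with (minus (- cos (a * (2 * PI)) / a) (- cos (a * 0) / a)) at 2.
    2: { unfold minus, plus, opp; simpl. rewrite Rmult_0_r, cos_0.
         replace (a * (2 * PI)) with (0 + 2 * IZR z * PI) by (unfold a; ring). rewrite cos_periodZ, cos_0. field; auto. }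
    apply (is_RInt_derive (fun t => - cos (a * t) / a)).
    + intros x _. auto_derive; auto. field; auto.
    + intros x _. apply (ex_derive_continuous (V := R_NormedModule)). auto_derive; auto.
Qed.

Definition cis (x : R) : C := (cos x, sin x).

Lemma cis_mult x y : (cis x * cis y)%C = cis (x + y).
Proof. unfold cis. apply injective_projections; simpl; rewrite ?cos_plus, ?sin_plus; ring. Qed.

Lemma Cmod_cis x : Cmod (cis x) = 1.
Proof.
  unfold Cmod, cis. simpl. pose proof (sin2_cos2 x). unfold Rsqr in H.
  replace (cos x * (cos x * 1) + sin x * (sin x * 1)) with 1 by nra. apply sqrt_1.
Qed.

Lemma H1_cis tau v m : H1 tau v m = (cis (- (IZR (m ^ 3) * tau)) * v m)%C.
Proof. unfold H1, cis. rewrite cos_neg, sin_neg. reflexivity. Qed.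

Lemma H1m_cis tau v m : H1 (- tau) v m = (cis (IZR (m ^ 3) * tau) * v m)%C.
Proof.
  unfold H1, cis. replace (IZR (m ^ 3) * - tau) with (- (IZR (m ^ 3) * tau)) by ring.
  rewrite cos_neg, sin_neg, Ropp_involutive. reflexivity.
Qed.

Lemma conj_cis x z : Cconj (cis x * z) = (cis (- x) * Cconj z)%C.
Proof. unfold cis, Cconj. apply injective_projections; simpl; rewrite ?cos_neg, ?sin_neg; ring. Qed.

Section L.
Variable s : R.
Hypothesis hs : 1/2 < s.
Variable w : seqZ.
Hypothesis Hw : in_Hs s w.
Variable n : Z.

Definition cc (k a : Z) : C := (w a * w (k - a)%Z * Cconj (w (k - n)%Z))%C.
Definition th (k a : Z) : Z := (n ^ 3 - a ^ 3 - (k - a) ^ 3 + (k - n) ^ 3)%Z.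
Definition gin (t : R) (k a : Z) : C := (cis (IZR (th k a) * t) * cc k a)%C.

Lemma Fnl_repr t : Fnl t w n = sumZ (fun k => sumZ (fun a => gin t k a)).
Proof.
  set (u := H1 t w).
  destruct (Hs_H1 s t w Hw) as [Hu _]. fold u in Hu.
  destruct (Hs_sconj s hs u Hu) as [Hsu _].
  destruct (Hs_conv s hs u u Hu Hu) as [Huu _].
  change (Fnl t w n) with (H1 (- t) (conv (conv u u) (sconj u)) n).
  rewrite H1m_cis. unfold conv at 1.
  rewrite <- sumZ_scal by (apply (cok_conv_term s hs); auto).
  apply sumZ_ext. intros k. unfold conv.
  rewrite <- sumZ_scal_r by (apply (cok_conv_term s hs); auto).
  rewrite <- sumZ_scal by (apply cok_scal_r, (cok_conv_term s hs); auto).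
  apply sumZ_ext. intros a. unfold sconj, u, gin, cc, th.
  rewrite !H1_cis, conj_cis.
  replace (- (n - k))%Z with (k - n)%Z by ring.
  transitivity ((cis (IZR (n ^ 3) * t) * cis (- (IZR (a ^ 3) * t)) * cis (- (IZR ((k - a) ^ 3) * t)) * cis (- - (IZR ((k - n) ^ 3) * t)))
     * (w a * w (k - a)%Z * Cconj (w (k - n)%Z)))%C.
  { ring. }
  rewrite !cis_mult. f_equal. f_equal.
  rewrite !plus_IZR, !minus_IZR. ring.
Qed.


Definition Jin (k a : Z) : C := if Z.eqb (th k a) 0 then (RtoC (2 * PI) * cc k a)%C else 0%C.
Definition Ires (k a : Z) : C := if Z.eqb (th k a) 0 then cc k a else 0%C.

Lemma lin_RInt (f g : R -> R) a b If Ig p q : is_RInt f a b If -> is_RInt g a b Ig ->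
  is_RInt (fun t => p * f t + q * g t) a b (p * If + q * Ig).
Proof.
  intros Hf Hg. apply (is_RInt_plus (fun t => p * f t) (fun t => q * g t)).
  apply (is_RInt_scal f a b p If Hf). apply (is_RInt_scal g a b q Ig Hg).
Qed.

Lemma int_gin k a : is_RInt (fun t => Re (gin t k a)) 0 (2 * PI) (Re (Jin k a)) /\
                    is_RInt (fun t => Im (gin t k a)) 0 (2 * PI) (Im (Jin k a)).
Proof.
  pose proof (int_cos (th k a)) as Hc. pose proof (int_sin (th k a)) as Hs.
  split.
  - replace (Re (Jin k a)) with (Re (cc k a) * (if (th k a =? 0)%Z then 2 * PI else 0) + - Im (cc k a) * 0).
    2: { unfold Jin. destruct (th k a =? 0)%Z; generalize (cc k a); intros [x y]; unfold Re, Im; simpl; ring. }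
    eapply is_RInt_ext; [| apply (lin_RInt _ _ _ _ _ _ (Re (cc k a)) (- Im (cc k a)) Hc Hs)].
    intros t _. unfold gin, cis. generalize (cc k a). intros [x y]. unfold Re, Im. simpl. ring.
  - replace (Im (Jin k a)) with (Im (cc k a) * (if (th k a =? 0)%Z then 2 * PI else 0) + Re (cc k a) * 0).
    2: { unfold Jin. destruct (th k a =? 0)%Z; generalize (cc k a); intros [x y]; unfold Re, Im; simpl; ring. }
    eapply is_RInt_ext; [| apply (lin_RInt _ _ _ _ _ _ (Im (cc k a)) (Re (cc k a)) Hc Hs)].
    intros t _. unfold gin, cis. generalize (cc k a). intros [x y]. unfold Re, Im. simpl. ring.
Qed.

Let nw := hs_norm s w.
Let L1 := zser (fun a => Cmod (w a)).

Lemma L1_ok : zok (fun a => Cmod (w a)).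
Proof. apply (Hs_l1 s hs w Hw). Qed.

Lemma cc_bound k a : Cmod (cc k a) <= (nw * Cmod (w (k - n)%Z)) * Cmod (w a).
Proof.
  unfold cc. rewrite !Cmod_mult, Cmod_conj.
  pose proof (Hs_pt s hs w (k - a)%Z Hw). fold nw in H.
  pose proof (Cmod_nonneg (w a)). pose proof (Cmod_nonneg (w (k - a)%Z)). pose proof (Cmod_nonneg (w (k - n)%Z)).
  assert (Cmod (w a) * Cmod (w (k - a)%Z) <= Cmod (w a) * nw) by (apply Rmult_le_compat_l; auto).
  nra.
Qed.

Lemma Min_ok k : zok (fun a => Cmod (cc k a)).
Proof.
  apply (proj1 (nn_le _ (fun a => (nw * Cmod (w (k - n)%Z)) * Cmod (w a)) (fun a => conj (Cmod_nonneg _) (cc_bound k a)) (zok_scal _ _ L1_ok))).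
Qed.

Lemma cok_Jin k : cok (Jin k).
Proof.
  apply cok_dom with (fun a => 2 * PI * Cmod (cc k a)).
  - intros a. unfold Jin. destruct (th k a =? 0)%Z.
    + rewrite Cmod_mult, Cmod_R, Rabs_pos_eq. lra. pose proof PI_RGT_0; lra.
    + rewrite Cmod_0. pose proof PI_RGT_0. pose proof (Cmod_nonneg (cc k a)). nra.
  - apply zok_scal, Min_ok.
Qed.

Lemma Cmod_gin t k a : Cmod (gin t k a) = Cmod (cc k a).
Proof. unfold gin. rewrite Cmod_mult, Cmod_cis. ring. Qed.

Lemma cok_gin t k : cok (gin t k).
Proof. apply cok_dom with (fun a => Cmod (cc k a)). intros; rewrite Cmod_gin; lra. apply Min_ok. Qed.

Lemma int_inner k : is_RInt (fun t => Re (sumZ (gin t k))) 0 (2 * PI) (Re (sumZ (Jin k))) /\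
                    is_RInt (fun t => Im (sumZ (gin t k))) 0 (2 * PI) (Im (sumZ (Jin k))).
Proof.
  assert (Hb : forall t a, Cmod (gin t k a) <= Cmod (cc k a)) by (intros; rewrite Cmod_gin; lra).
  exact (int_sumZ (2 * PI) (fun t => gin t k) (Jin k) (fun a => Cmod (cc k a))
     (fun a => proj1 (int_gin k a)) (fun a => proj2 (int_gin k a)) Hb (Min_ok k) (cok_Jin k)).
Qed.

Definition Mout (k : Z) := zser (fun a => Cmod (cc k a)).

Lemma Mout_ok : zok Mout.
Proof.
  assert (Hs1 : zok (fun k => Cmod (w (k - n)%Z))).
  { apply (proj1 (nn_reindex (fun x => Cmod (w x)) (fun k => (k - n)%Z) (fun x => Cmod_nonneg _) L1_ok ltac:(intros x y E; cbv beta in E; lia))). }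
  assert (Hle : forall k, 0 <= Mout k <= (nw * L1) * Cmod (w (k - n)%Z)).
  { intros k. split.
  - apply zser_nonneg. intros; apply Cmod_nonneg. apply Min_ok.
  - unfold Mout. apply Rle_trans with (zser (fun a => (nw * Cmod (w (k - n)%Z)) * Cmod (w a))).
    apply zser_le. apply Min_ok. apply zok_scal, L1_ok. intros; apply cc_bound.
    rewrite zser_scal. fold L1. lra. }
  apply (proj1 (nn_le _ _ Hle (zok_scal _ _ Hs1))).
Qed.

Lemma cok_sumJin : cok (fun k => sumZ (Jin k)).
Proof.
  apply cok_dom with (fun k => 2 * PI * Mout k).
  + intros k. eapply Rle_trans. apply Cmod_sumZ, cok_Jin.
    unfold Mout. rewrite <- zser_scal. apply zser_le. apply cok_Jin. apply zok_scal, Min_ok.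
    intros a. unfold Jin. destruct (th k a =? 0)%Z.
    * rewrite Cmod_mult, Cmod_R, Rabs_pos_eq. lra. pose proof PI_RGT_0; lra.
    * rewrite Cmod_0. pose proof PI_RGT_0. pose proof (Cmod_nonneg (cc k a)). nra.
  + apply zok_scal, Mout_ok.
Qed.

Lemma gout_bound t k : Cmod (sumZ (gin t k)) <= Mout k.
Proof.
  eapply Rle_trans. apply Cmod_sumZ, cok_gin. unfold Mout. right. apply zser_ext. intros; apply Cmod_gin.
Qed.

Lemma int_outer : is_RInt (fun t => Re (Fnl t w n)) 0 (2 * PI) (Re (sumZ (fun k => sumZ (Jin k)))) /\
                  is_RInt (fun t => Im (Fnl t w n)) 0 (2 * PI) (Im (sumZ (fun k => sumZ (Jin k)))).
Proof.
  pose proof (int_sumZ (2 * PI) (fun t k => sumZ (gin t k)) (fun k => sumZ (Jin k)) Mout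
     (fun k => proj1 (int_inner k)) (fun k => proj2 (int_inner k)) gout_bound Mout_ok cok_sumJin) as [H1 H2].
  assert (E : forall t, Fnl t w n = sumZ (fun k => sumZ (gin t k))) by (intros; apply Fnl_repr).
  split.
  - apply (is_RInt_ext (fun t => Re (sumZ (fun k => sumZ (gin t k))))). intros t _; rewrite E; auto. exact H1.
  - apply (is_RInt_ext (fun t => Im (sumZ (fun k => sumZ (gin t k))))). intros t _; rewrite E; auto. exact H2.
Qed.

End L.

Section M.
Variable s : R.
Hypothesis hs : 1/2 < s.
Variable w : seqZ.
Hypothesis Hw : in_Hs s w.
Variable n : Z.

Lemma th_eq k a : th n k a = (3 * k * (a - n) * (k - a - n))%Z.
Proof. unfold th. ring. Qed.

Lemma th_zero k a : th n k a = 0%Z <-> (k = 0 \/ a = n \/ a = k - n)%Z.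
Proof.
  rewrite th_eq. split.
  - intros H. apply Z.mul_eq_0 in H. destruct H as [H|H]; [apply Z.mul_eq_0 in H; destruct H as [H|H]; [apply Z.mul_eq_0 in H|]|]; lia.
  - intros [H|[H|H]]; subst; ring.
Qed.

Lemma cok_Ires k : cok (Ires w n k).
Proof.
  apply cok_dom with (fun a => Cmod (cc w n k a)).
  - intros a. unfold Ires. destruct (th n k a =? 0)%Z. lra. rewrite Cmod_0. apply Cmod_nonneg.
  - apply (Min_ok s hs w Hw).
Qed.

Lemma sumJin k : sumZ (Jin w n k) = (RtoC (2 * PI) * sumZ (Ires w n k))%C.
Proof.
  rewrite <- sumZ_scal by apply cok_Ires. apply sumZ_ext. intros a. unfold Jin, Ires.
  destruct (th n k a =? 0)%Z; auto. ring.
Qed.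

Definition Iout (k : Z) : C := sumZ (Ires w n k).

Lemma cok_Iout : cok Iout.
Proof.
  apply cok_dom with (Mout w n).
  - intros k. unfold Iout. eapply Rle_trans. apply Cmod_sumZ, cok_Ires. unfold Mout.
    apply zser_le. apply cok_Ires. apply (Min_ok s hs w Hw).
    intros a. unfold Ires. destruct (th n k a =? 0)%Z. lra. rewrite Cmod_0. apply Cmod_nonneg.
  - apply (Mout_ok s hs w Hw).
Qed.

Lemma sumJ_total : sumZ (fun k => sumZ (Jin w n k)) = (RtoC (2 * PI) * sumZ Iout)%C.
Proof.
  rewrite <- sumZ_scal by apply cok_Iout. apply sumZ_ext. intros k. apply sumJin.
Qed.

Lemma Ires_zero k a : (k <> 0)%Z -> a <> n -> a <> (k - n)%Z -> Ires w n k a = 0%C.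
Proof.
  intros Hk H1 H2. unfold Ires. destruct (Z.eqb_spec (th n k a) 0) as [E|E]; auto.
  apply th_zero in E. lia.
Qed.

Lemma Ires_res k a : (k = 0 \/ a = n \/ a = k - n)%Z -> Ires w n k a = cc w n k a.
Proof.
  intros H. unfold Ires. apply th_zero in H. rewrite H. auto.
Qed.

Lemma cok_br : cok (fun a => (w a * w (- a)%Z)%C).
Proof.
  apply cok_ext with (fun m => (w m * w (0 - m)%Z)%C). intros m; f_equal; f_equal; lia.
  apply (cok_conv_term s hs); auto.
Qed.

Lemma Iout_0 : Iout 0%Z = (bracket w w * Cconj (w (- n)%Z))%C.
Proof.
  unfold Iout, bracket. rewrite <- sumZ_scal_r by apply cok_br.
  apply sumZ_ext. intros a. rewrite Ires_res by auto. unfold cc.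
  replace (0 - a)%Z with (- a)%Z by lia. replace (0 - n)%Z with (- n)%Z by lia. auto.
Qed.

Lemma Iout_2n : n <> 0%Z -> Iout (2 * n)%Z = (w n * w n * Cconj (w n))%C.
Proof.
  intros Hn. unfold Iout.
  destruct (sumZ_one (Ires w n (2 * n)%Z) n) as [_ ->].
  - intros y Hy. apply Ires_zero; lia.
  - rewrite Ires_res by lia. unfold cc. replace (2 * n - n)%Z with n by lia. auto.
Qed.

Lemma Iout_gen k : k <> 0%Z -> k <> (2 * n)%Z ->
  Iout k = (w n * w (k - n)%Z * Cconj (w (k - n)%Z) + w (k - n)%Z * w n * Cconj (w (k - n)%Z))%C.
Proof.
  intros Hk Hk2. unfold Iout.
  destruct (sumZ_two (Ires w n k) n (k - n)%Z) as [_ ->].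
  - lia.
  - intros y H1 H2. apply Ires_zero; lia.
  - rewrite !Ires_res by lia. unfold cc. replace (k - (k - n))%Z with n by lia. auto.
Qed.

Definition Rk (k : Z) : C := (RtoC 2 * w n * RtoC (Cmod (w (k - n)%Z) ^ 2))%C.
Definition Ek (k : Z) : C := (Iout k - Rk k)%C.

Lemma Ek_zero k : k <> 0%Z -> k <> (2 * n)%Z -> Ek k = 0%C.
Proof.
  intros H1 H2. unfold Ek, Rk. rewrite Iout_gen by auto. rewrite Cmod2_conj. ring.
Qed.

Let sq := fun k => Cmod (w k) ^ 2.

Lemma sq_ok : zok sq.
Proof.
  assert (H : forall k, 0 <= sq k <= Wv s w k).
  { intros k. unfold sq, Wv. pose proof (weight_ge1 s hs k). pose proof (pow2_ge_0 (Cmod (w k))). split; nra. }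
  apply (proj1 (nn_le sq (Wv s w) H Hw)).
Qed.

Lemma sq_shift : zok (fun k => sq (k - n)%Z) /\ zser (fun k => sq (k - n)%Z) = zser sq.
Proof.
  apply (nn_reindex_eq sq (fun k => (k - n)%Z) (fun k => (k + n)%Z)); auto.
  intros; apply pow2_ge_0. apply sq_ok. intros; lia. intros; lia.
Qed.

Lemma cok_Rk : cok Rk.
Proof.
  apply cok_dom with (fun k => (2 * Cmod (w n)) * sq (k - n)%Z).
  - intros k. unfold Rk, sq. rewrite !Cmod_mult, !Cmod_R. rewrite Rabs_pos_eq by lra.
    rewrite (Rabs_pos_eq (Cmod _ ^ 2)) by apply pow2_ge_0. lra.
  - apply zok_scal, (proj1 sq_shift).
Qed.

Lemma sumRk : sumZ Rk = (RtoC 2 * w n * RtoC (zser sq))%C.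
Proof.
  unfold Rk. rewrite sumZ_scal.
  - f_equal. rewrite sumZ_real. f_equal. apply (proj2 sq_shift). apply (proj1 sq_shift).
  - apply cok_real. apply zok_ext with (fun k => sq (k - n)%Z). intros; unfold sq; rewrite Rabs_pos_eq; auto. apply pow2_ge_0.
    apply (proj1 sq_shift).
Qed.

Lemma cok_Ek : cok Ek.
Proof.
  apply cok_ext with (fun k => (Iout k + RtoC (-1) * Rk k)%C). intros; unfold Ek; ring.
  apply cok_plus. apply cok_Iout. apply cok_scal, cok_Rk.
Qed.

Lemma hnorm_sq : h_norm w ^ 2 = zser sq.
Proof.
  unfold h_norm. rewrite hs_norm_eq.
  assert (E : forall k, Wv 0 w k = sq k).
  { intros k. unfold Wv, sq, weight, Rpower. rewrite Rmult_0_l, exp_0. ring. }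
  rewrite (zser_ext _ sq E). rewrite pow2_sqrt; auto. apply zser_nonneg. intros; apply pow2_ge_0. apply sq_ok.
Qed.

Lemma sumIout : sumZ Iout = Nav w n.
Proof.
  rewrite (sumZ_ext Iout (fun k => (Rk k + Ek k)%C)) by (intros; unfold Ek; ring).
  rewrite sumZ_plus by (try apply cok_Rk; apply cok_Ek).
  rewrite sumRk. rewrite <- hnorm_sq.
  unfold Nav, sconj.
  destruct (Z.eq_dec n 0) as [Hn|Hn].
  - rewrite (proj2 (Z.eqb_eq n 0) Hn).
    destruct (sumZ_one Ek 0%Z) as [_ ->].
    { intros y Hy. apply Ek_zero; lia. }
    unfold Ek, Rk. rewrite Iout_0. rewrite Hn. replace (- 0)%Z with 0%Z by lia. replace (0 - 0)%Z with 0%Z by lia.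
    rewrite Cmod2_conj. ring.
  - rewrite (proj2 (Z.eqb_neq n 0) Hn).
    destruct (sumZ_two Ek 0%Z (2 * n)%Z) as [_ ->]. lia.
    { intros y H1 H2. apply Ek_zero; lia. }
    unfold Ek, Rk. rewrite Iout_0, Iout_2n by auto.
    replace (0 - n)%Z with (- n)%Z by lia. replace (2 * n - n)%Z with n by lia.
    rewrite !RtoC_plus, !RtoC_mult, !Cmod2_conj. ring.
Qed.

Lemma Nav_eq : Nav w n = Nav' w n.
Proof.
  unfold Nav, Nav', sconj. destruct (Z.eq_dec n 0) as [Hn|Hn].
  - rewrite (proj2 (Z.eqb_eq n 0) Hn). rewrite Hn. replace (- 0)%Z with 0%Z by lia.
    rewrite !RtoC_minus. ring.
  - rewrite (proj2 (Z.eqb_neq n 0) Hn).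
    rewrite !RtoC_minus, !RtoC_plus, !RtoC_mult. ring.
Qed.

End M.

Theorem lemma2p2 (s : R) (hs : 1/2 < s) :
  (forall tau w, in_Hs s w -> in_Hs s (Fnl tau w)) /\
  (forall tau, smooth_Hs s (Fnl tau)) /\
  (exists Cs, forall tau w, in_Hs s w ->
     hs_norm s (Fnl tau w) <= Cs * hs_norm s w ^ 3) /\
  (forall tau w, in_Hs s w -> Fnl (tau + 2 * PI) w = Fnl tau w) /\
  (forall w, in_Hs s w -> forall n : Z,
     ex_RInt (fun tau => Re (Fnl tau w n)) 0 (2 * PI) /\
     ex_RInt (fun tau => Im (Fnl tau w n)) 0 (2 * PI) /\
     (/ (2 * PI) * RInt (fun tau => Re (Fnl tau w n)) 0 (2 * PI),
      / (2 * PI) * RInt (fun tau => Im (Fnl tau w n)) 0 (2 * PI)) = Nav w n /\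
     Nav w n = Nav' w n).
Proof.
  split; [|split; [|split; [|split]]].
  - intros tau w Hw. rewrite Fnl_Tt. apply (Hs_Tt s hs); auto.
  - intros tau. apply (smooth_Fnl s hs tau).
  - exists (C0 s). intros tau w Hw. rewrite Fnl_Tt.
    eapply Rle_trans. apply (Hs_Tt s hs); auto. right. ring.
  - intros tau w _. apply Fnl_period.
  - intros w Hw n.
    destruct (int_outer s hs w Hw n) as [H1 H2].
    rewrite (sumJ_total s hs w Hw n) in H1, H2.
    split; [eexists; exact H1|]. split; [eexists; exact H2|].
    split; [| apply (Nav_eq w n)].
    rewrite (is_RInt_unique _ _ _ _ H1), (is_RInt_unique _ _ _ _ H2).
    rewrite (sumIout s hs w Hw n).
    pose proof PI_RGT_0.
    apply injective_projections; simpl; field; lra.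
Qed.
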